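(* For $M,N\in\Lambda$, if $M=_{\mathsf v}N$ then $\mathrm{NF}(\mathcal T(M))=\mathrm{NF}(\mathcal T(N))$.
   Context: Call-by-value $\lambda$-calculus with permutations: $\lambda$-terms and values are $M,N::=V\mid MN$, $V::=x\mid\lambda x.M$, up to $\alpha$-conversion. Rules: $(\beta_v)$ $(\lambda x.M)V\to M\{x:=V\}$ if $V$ is a value; $(\sigma_1)$ $(\lambda x.M)NP\to(\lambda x.MP)N$ if $x\notin\mathrm{FV}(P)$; $(\sigma_3)$ $V((\lambda x.M)N)\to(\lambda x.VM)N$ if $V$ is a value and $x\notin\mathrm{FV}(V)$. $\to_{\mathsf v}$ is their contextual closure and $=_{\mathsf v}$ its reflexive-symmetric-transitive closure. Resource calculus: resource values $v::=x\mid\lambda x.t$; simple terms $s,t::=st\mid[v_1,\dots,v_k]$ (bags are finite multisets); $[x^n]$ is $n$ copies of $x$. Linear substitution $e\langle x:=v_1,\dots,v_n\rangle$ is the set of terms obtained by replacing the $n$ free occurrences of $x$ in $e$ bijectively by $v_1,\dots,v_n$ (over all permutations), or $\emptyset$ if $x$ does not occur exactly $n$ times free. Constructors extend multilinearly to sets. Rules: $(\beta_r)$ $[\lambda x.t][v_1,\dots,v_n]\to t\langle x:=v_1,\dots,v_n\rangle$; $(0)$ $[v_1,\dots,v_n]t\to\emptyset$ if $n\ne1$; $(\sigma_1)$ $[\lambda x.t]s_1s_2\to[\lambda x.ts_2]s_1$ if $x\notin\mathrm{FV}(s_1)$; $(\sigma_3)$ $[v]([\lambda x.t]s)\to[\lambda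 x.[v]t]s$ if $x\notin\mathrm{FV}(v)$. $\to_{\mathsf r}$ is the closure of these rules under abstraction, both sides of application, elements of bags, and on finite sets ($e\to\mathcal E_1$, $e\notin\mathcal E_2$ imply $\{e\}\cup\mathcal E_2\to\mathcal E_1\cup\mathcal E_2$); it is confluent and strongly normalizing, $\mathrm{nf}(e)$ is the normal form and $\mathrm{NF}(\mathcal E)=\bigcup_{e\in\mathcal E}\mathrm{nf}(e)$. Taylor expansion: $\mathcal T(x)=\{[x^n]\mid n\ge0\}$, $\mathcal T(\lambda x.N)=\{[\lambda x.t_1,\dots,\lambda x.t_n]\mid n\ge0,\ t_i\in\mathcal T(N)\}$, $\mathcal T(PQ)=\{st\mid s\in\mathcal T(P),t\in\mathcal T(Q)\}$. *)

(* Defs.v *)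
(* Terms of both calculi are represented with de Bruijn
   indices, so alpha-conversion is built in. *)
From Stdlib Require Import List Permutation Relations Arith.
Import ListNotations.

Inductive lterm : Type :=
| LVar : nat -> lterm
| LLam : lterm -> lterm
| LApp : lterm -> lterm -> lterm.

Definition is_value (M : lterm) : Prop :=
  match M with LApp _ _ => False | _ => True end.

Fixpoint llift (k c : nat) (M : lterm) : lterm :=
  match M with
  | LVar m => if c <=? m then LVar (m + k) else LVar m
  | LLam N => LLam (llift k (S c) N)
  | LApp P Q => LApp (llift k c P) (llift k c Q)
  end.

(* lsubst d V M : M{d := V}, where V lives in the context with index d
   removed; indices above d are decremented. *)
Fixpoint lsubst (d : nat) (V M : lterm) : lterm :=
  match M with
  | LVar m => if m =? d then llift d 0 V
              else if d <? m then LVar (pred m) else LVar m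
  | LLam N => LLam (lsubst (S d) V N)
  | LApp P Q => LApp (lsubst d V P) (lsubst d V Q)
  end.

(* The side conditions x notin FV(P), x notin FV(V) of sigma_1/sigma_3 are
   the usual variable conventions; in de Bruijn form they become the
   lifting of P (resp. V) when it is moved under the binder. *)
Inductive vstep : lterm -> lterm -> Prop :=
| vs_beta M V : is_value V -> vstep (LApp (LLam M) V) (lsubst 0 V M)
| vs_sigma1 M N P :
    vstep (LApp (LApp (LLam M) N) P) (LApp (LLam (LApp M (llift 1 0 P))) N)
| vs_sigma3 V M N : is_value V ->
    vstep (LApp V (LApp (LLam M) N)) (LApp (LLam (LApp (llift 1 0 V) M)) N)
| vs_lam M M' : vstep M M' -> vstep (LLam M) (LLam M')
| vs_appl M M' N : vstep M M' -> vstep (LApp M N) (LApp M' N)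
| vs_appr M N N' : vstep N N' -> vstep (LApp M N) (LApp M N').

Definition veq : lterm -> lterm -> Prop := clos_refl_sym_trans lterm vstep.

(* simple terms, resource values, bags.  Bags are represented by lists;
   being multisets they are identified up to permutation by [req] below. *)
Inductive rterm : Type :=
| RApp : rterm -> rterm -> rterm
| RBag : rbag -> rterm
with rval : Type :=
| RVar : nat -> rval
| RLam : rterm -> rval
with rbag : Type :=
| BNil : rbag
| BCons : rval -> rbag -> rbag.

Fixpoint bag_list (b : rbag) : list rval :=
  match b with BNil => [] | BCons v b' => v :: bag_list b' end.

Definition sing (v : rval) : rbag := BCons v BNil.

Fixpoint rlift (k c : nat) (t : rterm) : rterm :=
  match t with
  | RApp s u => RApp (rlift k c s) (rlift k c u)
  | RBag b => RBag (blift k c b)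
  end
with vlift (k c : nat) (v : rval) : rval :=
  match v with
  | RVar m => if c <=? m then RVar (m + k) else RVar m
  | RLam t => RLam (rlift k (S c) t)
  end
with blift (k c : nat) (b : rbag) : rbag :=
  match b with
  | BNil => BNil
  | BCons v b' => BCons (vlift k c v) (blift k c b')
  end.

Inductive req : rterm -> rterm -> Prop :=
| req_app s s' u u' : req s s' -> req u u' -> req (RApp s u) (RApp s' u')
| req_bag b b' : beq b b' -> req (RBag b) (RBag b')
with rveq : rval -> rval -> Prop :=
| rveq_var m : rveq (RVar m) (RVar m)
| rveq_lam t t' : req t t' -> rveq (RLam t) (RLam t')
with beq : rbag -> rbag -> Prop :=
| beq_nil : beq BNil BNil
| beq_cons v v' b b' : rveq v v' -> beq b b' -> beq (BCons v b) (BCons v' b')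
| beq_swap v w b : beq (BCons v (BCons w b)) (BCons w (BCons v b))
| beq_trans b1 b2 b3 : beq b1 b2 -> beq b2 b3 -> beq b1 b3.

(* Linear substitution: [lsub d t vs u] means u belongs to the set
   t<d := vs>, i.e. u is obtained by replacing the free occurrences of the
   variable d in t bijectively by the values of the multiset vs (and
   decrementing the other free indices > d).  When d does not occur exactly
   |vs| times, no u satisfies it (the empty set). *)
Inductive lsub : nat -> rterm -> list rval -> rterm -> Prop :=
| ls_app d s u vs vs1 vs2 s' u' :
    Permutation vs (vs1 ++ vs2) -> lsub d s vs1 s' -> lsub d u vs2 u' ->
    lsub d (RApp s u) vs (RApp s' u')
| ls_bag d b vs b' : lsubb d b vs b' -> lsub d (RBag b) vs (RBag b')
with lsubv : nat -> rval -> list rval -> rval -> Prop :=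
| lsv_hit d v : lsubv d (RVar d) [v] (vlift d 0 v)
| lsv_lt d m : m < d -> lsubv d (RVar m) [] (RVar m)
| lsv_gt d m : d < m -> lsubv d (RVar m) [] (RVar (pred m))
| lsv_lam d t vs t' : lsub (S d) t vs t' -> lsubv d (RLam t) vs (RLam t')
with lsubb : nat -> rbag -> list rval -> rbag -> Prop :=
| lsb_nil d : lsubb d BNil [] BNil
| lsb_cons d v b vs vs1 vs2 v' b' :
    Permutation vs (vs1 ++ vs2) -> lsubv d v vs1 v' -> lsubb d b vs2 b' ->
    lsubb d (BCons v b) vs (BCons v' b').

Definition rset := rterm -> Prop.

Inductive rstep : rterm -> rset -> Prop :=
| rs_beta t b :
    rstep (RApp (RBag (sing (RLam t))) (RBag b)) (fun u => lsub 0 t (bag_list b) u)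
| rs_zero b u : length (bag_list b) <> 1 -> rstep (RApp (RBag b) u) (fun _ => False)
| rs_sigma1 t s1 s2 :
    rstep (RApp (RApp (RBag (sing (RLam t))) s1) s2)
          (eq (RApp (RBag (sing (RLam (RApp t (rlift 1 0 s2))))) s1))
| rs_sigma3 v t s :
    rstep (RApp (RBag (sing v)) (RApp (RBag (sing (RLam t))) s))
          (eq (RApp (RBag (sing (RLam (RApp (RBag (sing (vlift 1 0 v))) t)))) s))
| rs_appl s S u : rstep s S -> rstep (RApp s u) (fun w => exists s', S s' /\ w = RApp s' u)
| rs_appr s u U : rstep u U -> rstep (RApp s u) (fun w => exists u', U u' /\ w = RApp s u')
| rs_bag b B : rbstep b B -> rstep (RBag b) (fun w => exists b', B b' /\ w = RBag b')
with rvstep : rval -> (rval -> Prop) -> Prop :=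
| rvs_lam t T : rstep t T -> rvstep (RLam t) (fun w => exists t', T t' /\ w = RLam t')
with rbstep : rbag -> (rbag -> Prop) -> Prop :=
| rbs_head v V b : rvstep v V -> rbstep (BCons v b) (fun w => exists v', V v' /\ w = BCons v' b)
| rbs_tail v b B : rbstep b B -> rbstep (BCons v b) (fun w => exists b', B b' /\ w = BCons v b').

(* Reduction on sets: e -> E1 and e notin E2 imply {e} u E2 -> E1 u E2
   (here E2 = A \ {e}). *)
Definition setstep (A B : rset) : Prop :=
  exists e E1, rstep e E1 /\ A e /\
    (forall x, B x <-> (E1 x \/ (A x /\ x <> e))).

Definition rnormal (e : rterm) : Prop := forall E, ~ rstep e E.
Definition set_normal (F : rset) : Prop := forall x, F x -> rnormal x.

(* F is the normal form nf(e) of e (unique up to req, since ->_r is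
   confluent and strongly normalizing). *)
Definition is_nf (e : rterm) (F : rset) : Prop :=
  clos_refl_trans rset setstep (eq e) F /\ set_normal F.

Fixpoint bag_all (P : rval -> Prop) (b : rbag) : Prop :=
  match b with BNil => True | BCons v b' => P v /\ bag_all P b' end.

Fixpoint taylor (M : lterm) : rset :=
  match M with
  | LVar x => fun t => exists b, t = RBag b /\ bag_all (fun v => v = RVar x) b
  | LLam N => fun t => exists b, t = RBag b /\
                 bag_all (fun v => exists u, v = RLam u /\ taylor N u) b
  | LApp P Q => fun t => exists s u, t = RApp s u /\ taylor P s /\ taylor Q u
  end.

Definition NFset (E : rset) : rset :=
  fun t => exists e F, E e /\ is_nf e F /\ F t.

Definition rset_eq (A B : rset) : Prop :=
  forall t, (exists t', A t' /\ req t t') <-> (exists t', B t' /\ req t t').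

(* Main.v *)
Require Import Defs.
From Stdlib Require Import List Permutation Relations Arith Lia Classical ClassicalEpsilon FunctionalExtensionality PropExtensionality.
Import ListNotations.

Scheme rterm_ind2 := Induction for rterm Sort Prop
  with rval_ind2 := Induction for rval Sort Prop
  with rbag_ind2 := Induction for rbag Sort Prop.
Combined Scheme rtvb_ind from rterm_ind2, rval_ind2, rbag_ind2.

Ltac lsimpl := repeat match goal with
  | |- context [?a <=? ?b] => destruct (Nat.leb_spec a b)
  | H : context [?a <=? ?b] |- _ => destruct (Nat.leb_spec a b)
  end.

Lemma lift_lift_merge :
  (forall t j k c c', c <= c' -> c' <= c + k -> rlift j c' (rlift k c t) = rlift (j+k) c t) /\
  (forall v j k c c', c <= c' -> c' <= c + k -> vlift j c' (vlift k c v) = vlift (j+k) c v) /\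
  (forall b j k c c', c <= c' -> c' <= c + k -> blift j c' (blift k c b) = blift (j+k) c b).
Proof.
  apply rtvb_ind; intros; simpl; try reflexivity.
  - rewrite H, H0; auto.
  - rewrite H; auto.
  - destruct (Nat.leb_spec c n); simpl; lsimpl; first [reflexivity | f_equal; lia | exfalso; lia].
  - rewrite H; auto; lia.
  - rewrite H, H0; auto.
Qed.

Lemma lift_lift_comm :
  (forall t j k c c', c' <= c -> rlift j c' (rlift k c t) = rlift k (c + j) (rlift j c' t)) /\
  (forall v j k c c', c' <= c -> vlift j c' (vlift k c v) = vlift k (c + j) (vlift j c' v)) /\
  (forall b j k c c', c' <= c -> blift j c' (blift k c b) = blift k (c + j) (blift j c' b)).
Proof.
  apply rtvb_ind; intros; simpl; try reflexivity.
  - rewrite H, H0; auto.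
  - rewrite H; auto.
  - destruct (Nat.leb_spec c n); destruct (Nat.leb_spec c' n); simpl; lsimpl; first [reflexivity | f_equal; lia | exfalso; lia].
  - rewrite H by lia; reflexivity.
  - rewrite H, H0; auto.
Qed.

Lemma lift_zero :
  (forall t c, rlift 0 c t = t) /\ (forall v c, vlift 0 c v = v) /\ (forall b c, blift 0 c b = b).
Proof.
  apply rtvb_ind; intros; simpl; try reflexivity.
  - rewrite H, H0; auto.
  - rewrite H; auto.
  - destruct (c <=? n); f_equal; lia.
  - rewrite H; auto.
  - rewrite H, H0; auto.
Qed.

Scheme lsub_ind2 := Induction for lsub Sort Prop
  with lsubv_ind2 := Induction for lsubv Sort Prop
  with lsubb_ind2 := Induction for lsubb Sort Prop.
Combined Scheme lsub_all from lsub_ind2, lsubv_ind2, lsubb_ind2.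

Lemma lsub_perm_all :
  (forall d t vs u, lsub d t vs u -> forall vs', Permutation vs vs' -> lsub d t vs' u) /\
  (forall d v vs u, lsubv d v vs u -> forall vs', Permutation vs vs' -> lsubv d v vs' u) /\
  (forall d b vs u, lsubb d b vs u -> forall vs', Permutation vs vs' -> lsubb d b vs' u).
Proof.
  apply lsub_all; intros.
  - eapply ls_app; eauto. eapply Permutation_trans; [apply Permutation_sym|]; eauto.
  - constructor; auto.
  - apply Permutation_length_1_inv in H; subst; constructor.
  - apply Permutation_nil in H; subst; constructor; auto.
  - apply Permutation_nil in H; subst; constructor; auto.
  - constructor; auto.
  - apply Permutation_nil in H; subst; constructor.
  - eapply lsb_cons; eauto. eapply Permutation_trans; [apply Permutation_sym|]; eauto.
Qed.

Lemma lsub_perm d t vs u vs' : lsub d t vs u -> Permutation vs vs' -> lsub d t vs' u.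
Proof. intros; eapply lsub_perm_all; eauto. Qed.
Lemma lsubv_perm d t vs u vs' : lsubv d t vs u -> Permutation vs vs' -> lsubv d t vs' u.
Proof. intros; eapply lsub_perm_all; eauto. Qed.
Lemma lsubb_perm d t vs u vs' : lsubb d t vs u -> Permutation vs vs' -> lsubb d t vs' u.
Proof. intros; eapply lsub_perm_all; eauto. Qed.

Lemma lsubb_length d b vs b' : lsubb d b vs b' -> length (bag_list b') = length (bag_list b).
Proof. induction 1; simpl; auto. Qed.

Lemma lsub_noocc :
  (forall t d vs w, lsub d (rlift 1 d t) vs w -> vs = [] /\ w = t) /\
  (forall v d vs w, lsubv d (vlift 1 d v) vs w -> vs = [] /\ w = v) /\
  (forall b d vs w, lsubb d (blift 1 d b) vs w -> vs = [] /\ w = b).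
Proof.
  apply rtvb_ind; intros; simpl in *.
  - inversion H1; subst. destruct (H _ _ _ ltac:(eassumption)); destruct (H0 _ _ _ ltac:(eassumption)); subst.
    split; auto. apply Permutation_nil. apply Permutation_sym; auto.
  - inversion H0; subst. destruct (H _ _ _ ltac:(eassumption)); subst; auto.
  - destruct (Nat.leb_spec d n); inversion H; subst; try lia; split; auto; f_equal; lia.
  - inversion H0; subst. destruct (H _ _ _ ltac:(eassumption)); subst; auto.
  - inversion H; subst; auto.
  - inversion H1; subst. destruct (H _ _ _ ltac:(eassumption)); destruct (H0 _ _ _ ltac:(eassumption)); subst.
    split; auto. apply Permutation_nil. apply Permutation_sym; auto.
Qed.

Lemma lsub_noocc_intro :
  (forall t d, lsub d (rlift 1 d t) [] t) /\
  (forall v d, lsubv d (vlift 1 d v) [] v) /\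
  (forall b d, lsubb d (blift 1 d b) [] b).
Proof.
  apply rtvb_ind; intros; simpl in *.
  - eapply ls_app with (vs1 := []) (vs2 := []); eauto.
  - constructor; auto.
  - destruct (Nat.leb_spec d n).
    + replace n with (pred (n+1)) at 2 by lia. apply lsv_gt; lia.
    + apply lsv_lt; lia.
  - constructor; auto.
  - constructor.
  - eapply lsb_cons with (vs1 := []) (vs2 := []); eauto.
Qed.

Lemma lsub_lift_below :
  (forall d t vs u, lsub d t vs u -> forall k c, c <= d -> lsub (d+k) (rlift k c t) vs (rlift k c u)) /\
  (forall d v vs u, lsubv d v vs u -> forall k c, c <= d -> lsubv (d+k) (vlift k c v) vs (vlift k c u)) /\
  (forall d b vs u, lsubb d b vs u -> forall k c, c <= d -> lsubb (d+k) (blift k c b) vs (blift k c u)).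
Proof.
  apply lsub_all; intros; simpl.
  - eapply ls_app; eauto.
  - constructor; auto.
  - destruct (Nat.leb_spec c d); try lia.
    rewrite (proj1 (proj2 lift_lift_merge)) by lia. rewrite Nat.add_comm. constructor.
  - destruct (Nat.leb_spec c m); constructor; lia.
  - destruct (Nat.leb_spec c m); destruct (Nat.leb_spec c (pred m)); try lia.
    replace (pred m + k) with (pred (m+k)) by lia. constructor; lia.
  - constructor. apply (H k (S c)). lia.
  - constructor.
  - eapply lsb_cons; eauto.
Qed.

Lemma lsub_lift_below_inv :
  (forall t d vs w k c, c <= d -> lsub (d+k) (rlift k c t) vs w -> exists u, lsub d t vs u /\ w = rlift k c u) /\
  (forall v d vs w k c, c <= d -> lsubv (d+k) (vlift k c v) vs w -> exists u, lsubv d v vs u /\ w = vlift k c u) /\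
  (forall b d vs w k c, c <= d -> lsubb (d+k) (blift k c b) vs w -> exists u, lsubb d b vs u /\ w = blift k c u).
Proof.
  apply rtvb_ind; intros; simpl in *.
  - inversion H2; subst. destruct (H _ _ _ _ _ H1 ltac:(eassumption)) as [s1 [? ?]].
    destruct (H0 _ _ _ _ _ H1 ltac:(eassumption)) as [s2 [? ?]]; subst.
    exists (RApp s1 s2); split; auto. eapply ls_app; eauto.
  - inversion H1; subst. destruct (H _ _ _ _ _ H0 ltac:(eassumption)) as [b1 [? ?]]; subst.
    exists (RBag b1); split; auto. constructor; auto.
  - destruct (Nat.leb_spec c n); inversion H0; subst.
    + assert (n = d) by lia; subst. exists (vlift d 0 v); split. constructor.
      rewrite (proj1 (proj2 lift_lift_merge)) by lia. f_equal; lia.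
    + exists (RVar n); split. constructor; lia. simpl. destruct (Nat.leb_spec c n); try lia; auto.
    + exists (RVar (pred n)); split. constructor; lia. simpl. destruct (Nat.leb_spec c (pred n)); try lia; f_equal; lia.
    + lia.
    + exists (RVar n); split. constructor; lia. simpl. destruct (Nat.leb_spec c n); try lia; auto.
    + lia.
  - inversion H1; subst. destruct (H (S d) vs t' k (S c) ltac:(lia) ltac:(eassumption)) as [u [? ?]]; subst. exists (RLam u); split; auto. constructor; auto.
  - inversion H0; subst. exists BNil; split; auto. constructor.
  - inversion H2; subst. destruct (H _ _ _ _ _ H1 ltac:(eassumption)) as [s1 [? ?]].
    destruct (H0 _ _ _ _ _ H1 ltac:(eassumption)) as [s2 [? ?]]; subst.
    exists (BCons s1 s2); split; auto. eapply lsb_cons; eauto.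
Qed.

Lemma perm_map_split {A B} (f : A -> B) vs a b :
  Permutation (map f vs) (a ++ b) ->
  exists a0 b0, Permutation vs (a0 ++ b0) /\ a = map f a0 /\ b = map f b0.
Proof.
  intro H. apply Permutation_sym in H. apply Permutation_map_inv in H.
  destruct H as [l3 [H1 H2]]. symmetry in H1. apply map_eq_app in H1.
  destruct H1 as [a0 [b0 [? [? ?]]]]; subst. exists a0, b0; auto.
Qed.

Lemma lsub_lift_above :
  (forall d t vs u, lsub d t vs u -> forall k c, d <= c ->
     lsub d (rlift k (S c) t) (map (vlift k (c - d)) vs) (rlift k c u)) /\
  (forall d v vs u, lsubv d v vs u -> forall k c, d <= c ->
     lsubv d (vlift k (S c) v) (map (vlift k (c - d)) vs) (vlift k c u)) /\
  (forall d b vs u, lsubb d b vs u -> forall k c, d <= c ->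
     lsubb d (blift k (S c) b) (map (vlift k (c - d)) vs) (blift k c u)).
Proof.
  apply lsub_all; intros; cbn [rlift vlift blift map].
  - eapply ls_app; eauto. rewrite <- map_app. apply Permutation_map; auto.
  - constructor; auto.
  - destruct (Nat.leb_spec (S c) d); try lia.
    replace (vlift k c (vlift d 0 v)) with (vlift d 0 (vlift k (c - d) v)).
    constructor.
    rewrite (proj1 (proj2 lift_lift_comm)) by lia. f_equal. lia.
  - destruct (Nat.leb_spec (S c) m); destruct (Nat.leb_spec c m); try lia. constructor; lia.
  - destruct (Nat.leb_spec (S c) m); destruct (Nat.leb_spec c (pred m)); try lia.
    + replace (pred m + k) with (pred (m+k)) by lia. constructor; lia.
    + constructor; lia.
  - constructor. apply (H k (S c)). lia.
  - constructor.
  - eapply lsb_cons; eauto. rewrite <- map_app. apply Permutation_map; auto.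
Qed.

Ltac mapnil := match goal with
  | H : [] = map _ _ |- _ => symmetry in H; apply map_eq_nil in H; subst
  | H : map _ _ = [] |- _ => apply map_eq_nil in H; subst end.

Lemma lsub_lift_above_inv :
  (forall t d vs w k c, d <= c -> lsub d (rlift k (S c) t) (map (vlift k (c - d)) vs) w ->
     exists u, lsub d t vs u /\ w = rlift k c u) /\
  (forall v d vs w k c, d <= c -> lsubv d (vlift k (S c) v) (map (vlift k (c - d)) vs) w ->
     exists u, lsubv d v vs u /\ w = vlift k c u) /\
  (forall b d vs w k c, d <= c -> lsubb d (blift k (S c) b) (map (vlift k (c - d)) vs) w ->
     exists u, lsubb d b vs u /\ w = blift k c u).
Proof.
  apply rtvb_ind; intros; cbn [rlift vlift blift map] in *.
  - inversion H2; subst. apply perm_map_split in H5. destruct H5 as [a0 [b0 [? [? ?]]]]; subst.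
    destruct (H _ _ _ _ _ H1 ltac:(eassumption)) as [s1 [? ?]].
    destruct (H0 _ _ _ _ _ H1 ltac:(eassumption)) as [s2 [? ?]]; subst.
    exists (RApp s1 s2); split; auto. eapply ls_app; eauto.
  - inversion H1; subst. destruct (H _ _ _ _ _ H0 ltac:(eassumption)) as [b1 [? ?]]; subst.
    exists (RBag b1); split; auto. constructor; auto.
  - destruct (Nat.leb_spec (S c) n); inversion H0; subst; try lia.
    + mapnil. exists (RVar (pred n)); split. constructor; lia. simpl.
      destruct (Nat.leb_spec c (pred n)); try lia; f_equal; lia.
    + match goal with H : _ :: _ = map _ _ |- _ => symmetry in H; apply map_eq_cons in H;
        destruct H as [a [tl [? [? ?]]]]; subst end.
      mapnil.
      eexists; split. constructor.
      rewrite (proj1 (proj2 lift_lift_comm)) by lia. f_equal. lia.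
    + mapnil. exists (RVar n); split. constructor; lia. simpl.
      destruct (Nat.leb_spec c n); try lia; auto.
    + mapnil. exists (RVar (pred n)); split. constructor; lia. simpl.
      destruct (Nat.leb_spec c (pred n)); try lia; auto.
  - inversion H1; subst. destruct (H (S d) vs t' k (S c) ltac:(lia) ltac:(eassumption)) as [u [? ?]]; subst.
    exists (RLam u); split; auto. constructor; auto.
  - inversion H0; subst. mapnil. exists BNil; split; auto; constructor.
  - inversion H2; subst. apply perm_map_split in H5. destruct H5 as [a0 [b0 [? [? ?]]]]; subst.
    destruct (H _ _ _ _ _ H1 ltac:(eassumption)) as [s1 [? ?]].
    destruct (H0 _ _ _ _ _ H1 ltac:(eassumption)) as [s2 [? ?]]; subst.
    exists (BCons s1 s2); split; auto. eapply lsb_cons; eauto.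
Qed.

Lemma set_ext {X} (A B : X -> Prop) : (forall x, A x <-> B x) -> A = B.
Proof. intro H. apply functional_extensionality; intro x. apply propositional_extensionality; auto. Qed.

Scheme rstep_ind2 := Induction for rstep Sort Prop
  with rvstep_ind2 := Induction for rvstep Sort Prop
  with rbstep_ind2 := Induction for rbstep Sort Prop.
Combined Scheme rstep_all from rstep_ind2, rvstep_ind2, rbstep_ind2.

Lemma rstep_conv t T T' : rstep t T -> (forall x, T x <-> T' x) -> rstep t T'.
Proof. intros H E. rewrite <- (set_ext _ _ E). auto. Qed.
Lemma rvstep_conv t T T' : rvstep t T -> (forall x, T x <-> T' x) -> rvstep t T'.
Proof. intros H E. rewrite <- (set_ext _ _ E). auto. Qed.
Lemma rbstep_conv t T T' : rbstep t T -> (forall x, T x <-> T' x) -> rbstep t T'.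
Proof. intros H E. rewrite <- (set_ext _ _ E). auto. Qed.

Lemma bag_list_blift k c b : bag_list (blift k c b) = map (vlift k c) (bag_list b).
Proof. induction b; simpl; f_equal; auto. Qed.

Lemma rstep_lift :
  (forall t T, rstep t T -> forall k c, rstep (rlift k c t) (fun w => exists t', T t' /\ w = rlift k c t')) /\
  (forall v V, rvstep v V -> forall k c, rvstep (vlift k c v) (fun w => exists v', V v' /\ w = vlift k c v')) /\
  (forall b B, rbstep b B -> forall k c, rbstep (blift k c b) (fun w => exists b', B b' /\ w = blift k c b')).
Proof.
  apply rstep_all; intros; cbn [rlift vlift blift sing].
  - eapply rstep_conv. apply (rs_beta (rlift k (S c) t) (blift k c b)).
    intro w. rewrite bag_list_blift. split.
    + intro H. apply (proj1 lsub_lift_above_inv) with (d := 0) (c := c); [lia|].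
      rewrite Nat.sub_0_r. auto.
    + intros [u [H1 H2]]; subst. pose proof (proj1 lsub_lift_above _ _ _ _ H1 k c ltac:(lia)) as HH.
      rewrite Nat.sub_0_r in HH. auto.
  - eapply rstep_conv. apply rs_zero. rewrite bag_list_blift, length_map; auto.
    intro w; split; [tauto|]. intros [? [[] _]].
  - eapply rstep_conv. apply rs_sigma1. intro w; split.
    + intro H; subst. eexists; split; [reflexivity|]. cbn [rlift vlift blift sing].
      rewrite (proj1 lift_lift_comm) by lia. rewrite Nat.add_1_r. reflexivity.
    + intros [t' [H1 H2]]; subst. cbn [rlift vlift blift sing].
      rewrite (proj1 lift_lift_comm) by lia. rewrite Nat.add_1_r. reflexivity.
  - eapply rstep_conv. apply rs_sigma3. intro w; split.
    + intro H; subst. eexists; split; [reflexivity|]. cbn [rlift vlift blift sing].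
      rewrite (proj1 (proj2 lift_lift_comm)) by lia. rewrite Nat.add_1_r. reflexivity.
    + intros [t' [H1 H2]]; subst. cbn [rlift vlift blift sing].
      rewrite (proj1 (proj2 lift_lift_comm)) by lia. rewrite Nat.add_1_r. reflexivity.
  - eapply rstep_conv. apply rs_appl. apply H. intro w; split.
    + intros [s' [[t' [H1 H2]] H3]]; subst. exists (RApp t' u); split; [eauto | reflexivity].
    + intros [t' [[s' [H1 H2]] H3]]; subst. exists (rlift k c s'); split; [eauto | reflexivity].
  - eapply rstep_conv. apply rs_appr. apply H. intro w; split.
    + intros [s' [[t' [H1 H2]] H3]]; subst. exists (RApp s t'); split; [eauto | reflexivity].
    + intros [t' [[s' [H1 H2]] H3]]; subst. exists (rlift k c s'); split; [eauto | reflexivity].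
  - eapply rstep_conv. apply rs_bag. apply H. intro w; split.
    + intros [s' [[t' [H1 H2]] H3]]; subst. exists (RBag t'); split; [eauto | reflexivity].
    + intros [t' [[s' [H1 H2]] H3]]; subst. exists (blift k c s'); split; [eauto | reflexivity].
  - eapply rvstep_conv. apply rvs_lam. apply H. intro w; split.
    + intros [s' [[t' [H1 H2]] H3]]; subst. exists (RLam t'); split; [eauto | reflexivity].
    + intros [t' [[s' [H1 H2]] H3]]; subst. exists (rlift k (S c) s'); split; auto. exists s'; auto.
  - eapply rbstep_conv. apply rbs_head. apply H. intro w; split.
    + intros [s' [[t' [H1 H2]] H3]]; subst. exists (BCons t' b); split; [eauto | reflexivity].
    + intros [t' [[s' [H1 H2]] H3]]; subst. exists (vlift k c s'); split; [eauto | reflexivity].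
  - eapply rbstep_conv. apply rbs_tail. apply H. intro w; split.
    + intros [s' [[t' [H1 H2]] H3]]; subst. exists (BCons v t'); split; [eauto | reflexivity].
    + intros [t' [[s' [H1 H2]] H3]]; subst. exists (blift k c s'); split; [eauto | reflexivity].
Qed.

Definition tr := (rval * list rval * rval)%type.
Definition f1 (p : tr) := fst (fst p).
Definition f2 (p : tr) := snd (fst p).
Definition f3 (p : tr) := snd p.

Definition LSp d (cs vs cs' : list rval) : Prop :=
  exists L : list tr,
    Permutation cs (map f1 L) /\ Permutation cs' (map f3 L) /\
    Permutation vs (flat_map f2 L) /\ Forall (fun p => lsubv d (f1 p) (f2 p) (f3 p)) L.

Lemma perm_app4 {A} (a b a1 a2 b1 b2 : list A) :
  Permutation a (a1 ++ a2) -> Permutation b (b1 ++ b2) ->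
  Permutation (a ++ b) ((a1 ++ b1) ++ (a2 ++ b2)).
Proof.
  intros H1 H2. eapply Permutation_trans. apply Permutation_app; eauto.
  rewrite <- !app_assoc. apply Permutation_app_head.
  rewrite !app_assoc. apply Permutation_app_tail. apply Permutation_app_comm.
Qed.

Lemma perm_nil_map {A B} (f : A -> B) l : Permutation [] (map f l) -> l = [].
Proof. intro H. apply Permutation_nil in H. destruct l; simpl in *; congruence. Qed.

Lemma LSp_nil_r d cs vs : LSp d cs vs [] -> cs = [] /\ vs = [].
Proof.
  intros [L [H1 [H2 [H3 H4]]]]. apply perm_nil_map in H2; subst. simpl in *.
  split; apply Permutation_nil; apply Permutation_sym; auto.
Qed.

Lemma LSp_nil_l d cs' vs : LSp d [] vs cs' -> cs' = [] /\ vs = [].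
Proof.
  intros [L [H1 [H2 [H3 H4]]]]. apply perm_nil_map in H1; subst. simpl in *.
  split; apply Permutation_nil; apply Permutation_sym; auto.
Qed.

Lemma LSp_one_r d cs vs c' : LSp d cs vs [c'] -> exists c, cs = [c] /\ lsubv d c vs c'.
Proof.
  intros [L [H1 [H2 [H3 H4]]]]. destruct L as [|p [|q L]]; simpl in *.
  - apply Permutation_length in H2; discriminate.
  - apply Permutation_sym, Permutation_length_1_inv in H1. apply Permutation_length_1 in H2. subst.
    rewrite app_nil_r in H3. inversion H4; subst. exists (f1 p); split; auto.
    eapply lsubv_perm; eauto. apply Permutation_sym; auto.
  - apply Permutation_length in H2; discriminate.
Qed.

Lemma LSp_one_l d c vs cs' : LSp d [c] vs cs' -> exists c', cs' = [c'] /\ lsubv d c vs c'.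
Proof.
  intros [L [H1 [H2 [H3 H4]]]]. destruct L as [|p [|q L]]; simpl in *.
  - apply Permutation_length in H1; discriminate.
  - apply Permutation_length_1 in H1. apply Permutation_sym, Permutation_length_1_inv in H2. subst.
    rewrite app_nil_r in H3. inversion H4; subst. exists (f3 p); split; auto.
    eapply lsubv_perm; eauto. apply Permutation_sym; auto.
  - apply Permutation_length in H1; discriminate.
Qed.

Lemma LSp_nil d : LSp d [] [] [].
Proof. exists []; simpl; repeat split; auto. Qed.

Lemma LSp_one d c vs c' : lsubv d c vs c' -> LSp d [c] vs [c'].
Proof. intro H. exists [(c, vs, c')]; simpl. rewrite app_nil_r. repeat split; auto. Qed.

Lemma LSp_app d p1 v1 q1 p2 v2 q2 : LSp d p1 v1 q1 -> LSp d p2 v2 q2 -> LSp d (p1++p2) (v1++v2) (q1++q2).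
Proof.
  intros [L1 [A1 [B1 [C1 D1]]]] [L2 [A2 [B2 [C2 D2]]]]. exists (L1 ++ L2).
  rewrite !map_app, flat_map_app. repeat split; try apply Permutation_app; auto.
  apply Forall_app; auto.
Qed.

Lemma LSp_perm d cs vs cs' cs2 vs2 cs2' :
  Permutation cs cs2 -> Permutation vs vs2 -> Permutation cs' cs2' -> LSp d cs vs cs' -> LSp d cs2 vs2 cs2'.
Proof.
  intros P1 P2 P3 [L [A1 [B1 [C1 D1]]]]. exists L. repeat split; auto.
  - eapply Permutation_trans; [apply Permutation_sym|]; eauto.
  - eapply Permutation_trans; [apply Permutation_sym|]; eauto.
  - eapply Permutation_trans; [apply Permutation_sym|]; eauto.
Qed.

Lemma LSp_split_r d cs vs cs' q1 q2 : LSp d cs vs cs' -> Permutation cs' (q1 ++ q2) ->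
  exists p1 p2 v1 v2, Permutation cs (p1 ++ p2) /\ Permutation vs (v1 ++ v2) /\
    LSp d p1 v1 q1 /\ LSp d p2 v2 q2.
Proof.
  intros [L [A1 [B1 [C1 D1]]]] P.
  assert (Permutation (q1 ++ q2) (map f3 L)) as P2.
  { eapply Permutation_trans; [apply Permutation_sym; eauto | auto]. }
  apply Permutation_map_inv in P2. destruct P2 as [L' [E PL]].
  symmetry in E. apply map_eq_app in E. destruct E as [L1 [L2 [? [? ?]]]]; subst.
  exists (map f1 L1), (map f1 L2), (flat_map f2 L1), (flat_map f2 L2).
  repeat split.
  - rewrite <- map_app. eapply Permutation_trans; eauto. apply Permutation_map; auto.
  - rewrite <- flat_map_app. eapply Permutation_trans; eauto. apply Permutation_flat_map; auto.
  - exists L1; repeat split; auto. rewrite Forall_forall in *. intros x Hx. apply D1.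
    eapply Permutation_in; [apply Permutation_sym; eauto|]. apply in_or_app; auto.
  - exists L2; repeat split; auto. rewrite Forall_forall in *. intros x Hx. apply D1.
    eapply Permutation_in; [apply Permutation_sym; eauto|]. apply in_or_app; auto.
Qed.

Lemma LSp_split_l d cs vs cs' p1 p2 : LSp d cs vs cs' -> Permutation cs (p1 ++ p2) ->
  exists q1 q2 v1 v2, Permutation cs' (q1 ++ q2) /\ Permutation vs (v1 ++ v2) /\
    LSp d p1 v1 q1 /\ LSp d p2 v2 q2.
Proof.
  intros [L [A1 [B1 [C1 D1]]]] P.
  assert (Permutation (p1 ++ p2) (map f1 L)) as P2.
  { eapply Permutation_trans; [apply Permutation_sym; eauto | auto]. }
  apply Permutation_map_inv in P2. destruct P2 as [L' [E PL]].
  symmetry in E. apply map_eq_app in E. destruct E as [L1 [L2 [? [? ?]]]]; subst.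
  exists (map f3 L1), (map f3 L2), (flat_map f2 L1), (flat_map f2 L2).
  repeat split.
  - rewrite <- map_app. eapply Permutation_trans; eauto. apply Permutation_map; auto.
  - rewrite <- flat_map_app. eapply Permutation_trans; eauto. apply Permutation_flat_map; auto.
  - exists L1; repeat split; auto. rewrite Forall_forall in *. intros x Hx. apply D1.
    eapply Permutation_in; [apply Permutation_sym; eauto|]. apply in_or_app; auto.
  - exists L2; repeat split; auto. rewrite Forall_forall in *. intros x Hx. apply D1.
    eapply Permutation_in; [apply Permutation_sym; eauto|]. apply in_or_app; auto.
Qed.

Lemma lsubb_LSp d b vs b' : lsubb d b vs b' -> LSp d (bag_list b) vs (bag_list b').
Proof.
  induction 1; simpl. apply LSp_nil.
  apply (LSp_perm d ([v] ++ bag_list b) (vs1 ++ vs2) ([v'] ++ bag_list b'));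
    [apply Permutation_refl | apply Permutation_sym; auto | apply Permutation_refl |].
  apply LSp_app; auto. apply LSp_one; auto.
Qed.

Lemma LSp_lsubb d c : forall vs cs', LSp d (bag_list c) vs cs' ->
  exists c', lsubb d c vs c' /\ Permutation (bag_list c') cs'.
Proof.
  induction c; simpl; intros vs cs' H.
  - apply LSp_nil_l in H. destruct H; subst. exists BNil; split; auto. constructor.
  - apply LSp_split_l with (p1 := [r]) (p2 := bag_list c) in H; auto.
    destruct H as [q1 [q2 [v1 [v2 [P1 [P2 [H1 H2]]]]]]].
    apply LSp_one_l in H1. destruct H1 as [c' [? ?]]; subst.
    apply IHc in H2. destruct H2 as [c0 [? ?]].
    exists (BCons c' c0); split. eapply lsb_cons; eauto.
    simpl. apply Permutation_sym. eapply Permutation_trans; eauto. simpl.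
    apply perm_skip. apply Permutation_sym; auto.
Qed.

Lemma vlift_split x e d : vlift (e + S d) 0 x = vlift 1 e (vlift (e + d) 0 x).
Proof. rewrite (proj1 (proj2 lift_lift_merge)) by lia. f_equal. lia. Qed.

Lemma comp1 :
  (forall r e d vs1 r', lsub (e + S d) r vs1 r' -> forall cs vs2 cs', LSp d cs vs2 cs' ->
     forall w, lsub e r' cs' w -> exists m, lsub e r cs m /\ lsub (e + d) m (vs1 ++ vs2) w) /\
  (forall r e d vs1 r', lsubv (e + S d) r vs1 r' -> forall cs vs2 cs', LSp d cs vs2 cs' ->
     forall w, lsubv e r' cs' w -> exists m, lsubv e r cs m /\ lsubv (e + d) m (vs1 ++ vs2) w) /\
  (forall r e d vs1 r', lsubb (e + S d) r vs1 r' -> forall cs vs2 cs', LSp d cs vs2 cs' ->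
     forall w, lsubb e r' cs' w -> exists m, lsubb e r cs m /\ lsubb (e + d) m (vs1 ++ vs2) w).
Proof.
  apply rtvb_ind.
  -
    intros a IHa b IHb e d vs1 r' H cs vs2 cs' HL w Hw.
    inversion H; subst. inversion Hw; subst.
    destruct (LSp_split_r _ _ _ _ _ _ HL ltac:(eassumption)) as [p1 [p2 [y1 [y2 [P1 [P2 [L1 L2]]]]]]].
    destruct (IHa _ _ _ _ ltac:(eassumption) _ _ _ L1 _ ltac:(eassumption)) as [ma [Ma1 Ma2]].
    destruct (IHb _ _ _ _ ltac:(eassumption) _ _ _ L2 _ ltac:(eassumption)) as [mb [Mb1 Mb2]].
    exists (RApp ma mb); split.
    + eapply ls_app; [exact P1 | exact Ma1 | exact Mb1].
    + eapply ls_app; [| exact Ma2 | exact Mb2]. apply perm_app4; auto.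
  -
    intros b IHb e d vs1 r' H cs vs2 cs' HL w Hw.
    inversion H; subst. inversion Hw; subst.
    destruct (IHb _ _ _ _ ltac:(eassumption) _ _ _ HL _ ltac:(eassumption)) as [mb [Mb1 Mb2]].
    exists (RBag mb); split; constructor; auto.
  -
    intros n e d vs1 r' H cs vs2 cs' HL w Hw.
    inversion H; subst.
    + rewrite vlift_split in Hw. destruct (proj1 (proj2 lsub_noocc) _ _ _ _ Hw); subst.
      destruct (LSp_nil_r _ _ _ HL); subst.
      exists (RVar (e + d)); split.
      * pose proof (lsv_gt e (e + S d) ltac:(lia)) as HH.
        replace (pred (e + S d)) with (e + d) in HH by lia. exact HH.
      * simpl. constructor.
    + inversion Hw; subst.
      * destruct (LSp_one_r _ _ _ _ HL) as [c [? Hc]]; subst.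
        exists (vlift n 0 c); split. constructor.
        simpl. rewrite Nat.add_comm. apply (proj1 (proj2 lsub_lift_below)); auto; lia.
      * destruct (LSp_nil_r _ _ _ HL); subst. exists (RVar n); split; constructor; lia.
      * destruct (LSp_nil_r _ _ _ HL); subst. exists (RVar (pred n)); split; constructor; lia.
    + inversion Hw; subst; try lia.
      destruct (LSp_nil_r _ _ _ HL); subst. exists (RVar (pred n)); split; constructor; lia.
  -
    intros t IHt e d vs1 r' H cs vs2 cs' HL w Hw.
    inversion H; subst. inversion Hw; subst.
    destruct (IHt (S e) d vs1 t' ltac:(assumption) _ _ _ HL _ ltac:(eassumption)) as [mt [M1 M2]].
    exists (RLam mt); split; constructor; auto.
  -
    intros e d vs1 r' H cs vs2 cs' HL w Hw.
    inversion H; subst. inversion Hw; subst.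
    destruct (LSp_nil_r _ _ _ HL); subst. exists BNil; split; constructor.
  -
    intros a IHa b IHb e d vs1 r' H cs vs2 cs' HL w Hw.
    inversion H; subst. inversion Hw; subst.
    destruct (LSp_split_r _ _ _ _ _ _ HL ltac:(eassumption)) as [p1 [p2 [y1 [y2 [P1 [P2 [L1 L2]]]]]]].
    destruct (IHa _ _ _ _ ltac:(eassumption) _ _ _ L1 _ ltac:(eassumption)) as [ma [Ma1 Ma2]].
    destruct (IHb _ _ _ _ ltac:(eassumption) _ _ _ L2 _ ltac:(eassumption)) as [mb [Mb1 Mb2]].
    exists (BCons ma mb); split.
    + eapply lsb_cons; [exact P1 | exact Ma1 | exact Mb1].
    + eapply lsb_cons; [| exact Ma2 | exact Mb2]. apply perm_app4; auto.
Qed.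

Lemma comp2 :
  (forall r e d cs m, lsub e r cs m -> forall vs w, lsub (e + d) m vs w ->
     exists vs1 vs2 r' cs', Permutation vs (vs1 ++ vs2) /\ lsub (e + S d) r vs1 r' /\
       LSp d cs vs2 cs' /\ lsub e r' cs' w) /\
  (forall r e d cs m, lsubv e r cs m -> forall vs w, lsubv (e + d) m vs w ->
     exists vs1 vs2 r' cs', Permutation vs (vs1 ++ vs2) /\ lsubv (e + S d) r vs1 r' /\
       LSp d cs vs2 cs' /\ lsubv e r' cs' w) /\
  (forall r e d cs m, lsubb e r cs m -> forall vs w, lsubb (e + d) m vs w ->
     exists vs1 vs2 r' cs', Permutation vs (vs1 ++ vs2) /\ lsubb (e + S d) r vs1 r' /\
       LSp d cs vs2 cs' /\ lsubb e r' cs' w).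
Proof.
  apply rtvb_ind.
  - intros a IHa b IHb e d cs m H vs w Hw.
    inversion H; subst. inversion Hw; subst.
    destruct (IHa _ _ _ _ ltac:(eassumption) _ _ ltac:(eassumption)) as [x1 [y1 [a' [q1 [Pa [Ha [La Wa]]]]]]].
    destruct (IHb _ _ _ _ ltac:(eassumption) _ _ ltac:(eassumption)) as [x2 [y2 [bb' [q2 [Pb [Hb [Lb Wb]]]]]]].
    exists (x1 ++ x2), (y1 ++ y2), (RApp a' bb'), (q1 ++ q2). repeat split.
    + eapply Permutation_trans; [eassumption|]. apply perm_app4; auto.
    + eapply ls_app; [apply Permutation_refl | exact Ha | exact Hb].
    + eapply LSp_perm; [| apply Permutation_refl | apply Permutation_refl | apply LSp_app; eauto].
      apply Permutation_sym; auto.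
    + eapply ls_app; [apply Permutation_refl | exact Wa | exact Wb].
  - intros b IHb e d cs m H vs w Hw.
    inversion H; subst. inversion Hw; subst.
    destruct (IHb _ _ _ _ ltac:(eassumption) _ _ ltac:(eassumption)) as [x1 [y1 [a' [q1 [Pa [Ha [La Wa]]]]]]].
    exists x1, y1, (RBag a'), q1. repeat split; auto; constructor; auto.
  - intros n e d cs m H vs w Hw.
    inversion H; subst.
    + rewrite Nat.add_comm in Hw.
      destruct (proj1 (proj2 lsub_lift_below_inv) _ d _ _ _ 0 ltac:(lia) Hw) as [u [Hu ?]]; subst.
      exists [], vs, (RVar n), [u]. repeat split; auto.
      * constructor; lia.
      * apply LSp_one; auto.
      * constructor.
    + inversion Hw; subst; try lia.
      exists [], [], (RVar n), []. repeat split; auto; try constructor; try lia. apply LSp_nil.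
    + inversion Hw; subst.
      * exists [v], [], (vlift (e + S d) 0 v), []. repeat split.
        -- rewrite app_nil_r; auto.
        -- replace n with (e + S d) by lia. constructor.
        -- apply LSp_nil.
        -- rewrite vlift_split. apply lsub_noocc_intro.
      * exists [], [], (RVar n), []. repeat split; try apply LSp_nil; try (constructor; lia); auto.
      * exists [], [], (RVar (pred n)), []. repeat split; try apply LSp_nil; try (constructor; lia); auto.
  - intros t IHt e d cs m H vs w Hw.
    inversion H; subst. inversion Hw; subst.
    destruct (IHt (S e) d _ _ ltac:(eassumption) _ _ ltac:(eassumption)) as [x1 [y1 [a' [q1 [Pa [Ha [La Wa]]]]]]].
    exists x1, y1, (RLam a'), q1. repeat split; auto; constructor; auto.
  - intros e d cs m H vs w Hw.
    inversion H; subst. inversion Hw; subst.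
    exists [], [], BNil, []. repeat split; auto; try constructor. apply LSp_nil.
  - intros a IHa b IHb e d cs m H vs w Hw.
    inversion H; subst. inversion Hw; subst.
    destruct (IHa _ _ _ _ ltac:(eassumption) _ _ ltac:(eassumption)) as [x1 [y1 [a' [q1 [Pa [Ha [La Wa]]]]]]].
    destruct (IHb _ _ _ _ ltac:(eassumption) _ _ ltac:(eassumption)) as [x2 [y2 [bb' [q2 [Pb [Hb [Lb Wb]]]]]]].
    exists (x1 ++ x2), (y1 ++ y2), (BCons a' bb'), (q1 ++ q2). repeat split.
    + eapply Permutation_trans; [eassumption|]. apply perm_app4; auto.
    + eapply lsb_cons; [apply Permutation_refl | exact Ha | exact Hb].
    + eapply LSp_perm; [| apply Permutation_refl | apply Permutation_refl | apply LSp_app; eauto].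
      apply Permutation_sym; auto.
    + eapply lsb_cons; [apply Permutation_refl | exact Wa | exact Wb].
Qed.

Definition rv_dec (x y : rval) : {x = y} + {x <> y} := excluded_middle_informative (x = y).
Definition cnt (l : list rval) (x : rval) := count_occ rv_dec l x.
Definition cnt1 (a : rval) (x : rval) := count_occ rv_dec [a] x.
Lemma cnt_app l1 l2 x : cnt (l1 ++ l2) x = cnt l1 x + cnt l2 x.
Proof. apply count_occ_app. Qed.
Lemma cnt_cons a l x : cnt (a :: l) x = cnt1 a x + cnt l x.
Proof. unfold cnt, cnt1. simpl. destruct (rv_dec a x); auto. Qed.
Lemma cnt_nil x : cnt [] x = 0.
Proof. reflexivity. Qed.
Lemma perm_cnt l1 l2 : Permutation l1 l2 <-> forall x, cnt l1 x = cnt l2 x.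
Proof. apply Permutation_count_occ. Qed.
Global Opaque cnt cnt1.

Ltac psolve :=
  apply perm_cnt; let x := fresh "x" in intro x;
  repeat match goal with H : @Permutation rval ?a ?b |- _ =>
    pose proof (proj1 (perm_cnt a b) H x); clear H end;
  repeat (rewrite ?cnt_app, ?cnt_cons, ?cnt_nil in * ); lia.

Goal forall (a b c d e : list rval), Permutation a (b ++ c) -> Permutation c (d ++ []) ->
  Permutation (e ++ a) (d ++ e ++ b).
Proof. intros. psolve. Qed.

Ltac inv_lsub := repeat match goal with
 | H : lsubb _ (sing _) _ _ |- _ => unfold sing in H
 | H : lsub _ (RApp _ _) _ _ |- _ => inversion H; subst; clear H
 | H : lsub _ (RBag _) _ _ |- _ => inversion H; subst; clear H
 | H : lsubb _ (BCons _ _) _ _ |- _ => inversion H; subst; clear H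
 | H : lsubb _ BNil _ _ |- _ => inversion H; subst; clear H
 | H : lsubv _ (RLam _) _ _ |- _ => inversion H; subst; clear H
 end.

Lemma lift1 :
  (forall d t vs u, lsub d t vs u -> lsub (S d) (rlift 1 0 t) vs (rlift 1 0 u)) /\
  (forall d t vs u, lsubv d t vs u -> lsubv (S d) (vlift 1 0 t) vs (vlift 1 0 u)).
Proof.
  split; intros.
  - rewrite <- Nat.add_1_r. apply lsub_lift_below; auto; lia.
  - rewrite <- Nat.add_1_r. apply lsub_lift_below; auto; lia.
Qed.

Lemma lsub_app' d a x a' b y b' vs : lsub d a x a' -> lsub d b y b' -> Permutation vs (x ++ y) ->
  lsub d (RApp a b) vs (RApp a' b').
Proof. intros; eapply ls_app; eauto. Qed.
Lemma lsub_sing d v x v' : lsubv d v x v' -> lsub d (RBag (sing v)) x (RBag (sing v')).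
Proof. intros; constructor; eapply lsb_cons; eauto. rewrite app_nil_r; apply Permutation_refl. constructor. Qed.

Lemma subst_step :
  (forall t T, rstep t T -> forall d vs u, lsub d t vs u ->
     exists U, rstep u U /\ forall w, U w -> exists t', T t' /\ lsub d t' vs w) /\
  (forall t T, rvstep t T -> forall d vs u, lsubv d t vs u ->
     exists U, rvstep u U /\ forall w, U w -> exists t', T t' /\ lsubv d t' vs w) /\
  (forall t T, rbstep t T -> forall d vs u, lsubb d t vs u ->
     exists U, rbstep u U /\ forall w, U w -> exists t', T t' /\ lsubb d t' vs w).
Proof.
  apply rstep_all.
  -
    intros r c d vs u H. inv_lsub.
    eexists; split. apply rs_beta.
    intros w Hw.
    destruct (proj1 comp1 r 0 d _ _ ltac:(eassumption) _ _ _ (lsubb_LSp _ _ _ _ ltac:(eassumption)) w Hw)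
      as [m [M1 M2]].
    exists m; split; auto. eapply lsub_perm; [eassumption | psolve].
  -
    intros b u0 Hl d vs u H. inv_lsub.
    eexists; split. apply rs_zero. erewrite lsubb_length; eauto. intros w [].
  -
    intros r s1 s2 d vs u H. inv_lsub.
    eexists; split. apply rs_sigma1.
    intros w Hw; subst. eexists; split; [reflexivity|].
    eapply ls_app; [| | eassumption]. 2:{ constructor. eapply lsb_cons; [| | constructor].
      2:{ constructor. eapply ls_app; [| eassumption | apply lift1; eassumption]. apply Permutation_refl. }
      apply Permutation_refl. }
    psolve.
  -
    intros v r s d vs u H. inv_lsub.
    eexists; split. apply rs_sigma3.
    intros w Hw; subst. eexists; split; [reflexivity|].
    eapply ls_app; [| | eassumption]. 2:{ constructor. eapply lsb_cons; [| | constructor].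
      2:{ constructor. eapply ls_app; [| | eassumption].
          2:{ constructor. eapply lsb_cons; [| apply lift1; eassumption | constructor].
              apply Permutation_refl. }
          apply Permutation_refl. }
      apply Permutation_refl. }
    psolve.
  -
    intros s S u0 Hs IH d vs u H. inv_lsub.
    destruct (IH _ _ _ ltac:(eassumption)) as [U [HU HU']].
    eexists; split. apply rs_appl; eauto.
    intros w [w' [Hw' ?]]; subst. destruct (HU' _ Hw') as [tt [Ht' Ht'']].
    exists (RApp tt u0); split; eauto. eapply ls_app; eauto.
  -
    intros s u0 U0 Hs IH d vs u H. inv_lsub.
    destruct (IH _ _ _ ltac:(eassumption)) as [U [HU HU']].
    eexists; split. apply rs_appr; eauto.
    intros w [w' [Hw' ?]]; subst. destruct (HU' _ Hw') as [tt [Ht' Ht'']].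
    exists (RApp s tt); split; eauto. eapply ls_app; eauto.
  -
    intros b B Hb IH d vs u H. inv_lsub.
    destruct (IH _ _ _ ltac:(eassumption)) as [U [HU HU']].
    eexists; split. apply rs_bag; eauto.
    intros w [w' [Hw' ?]]; subst. destruct (HU' _ Hw') as [tt [Ht' Ht'']].
    exists (RBag tt); split; eauto. constructor; eauto.
  -
    intros t T Ht IH d vs u H. inv_lsub.
    destruct (IH _ _ _ ltac:(eassumption)) as [U [HU HU']].
    eexists; split. apply rvs_lam; eauto.
    intros w [w' [Hw' ?]]; subst. destruct (HU' _ Hw') as [tt [Ht' Ht'']].
    exists (RLam tt); split; eauto. constructor; eauto.
  -
    intros v V b Hv IH d vs u H. inv_lsub.
    destruct (IH _ _ _ ltac:(eassumption)) as [U [HU HU']].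
    eexists; split. apply rbs_head; eauto.
    intros w [w' [Hw' ?]]; subst. destruct (HU' _ Hw') as [tt [Ht' Ht'']].
    exists (BCons tt b); split; eauto. eapply lsb_cons; eauto.
  -
    intros v b B Hb IH d vs u H. inv_lsub.
    destruct (IH _ _ _ ltac:(eassumption)) as [U [HU HU']].
    eexists; split. apply rbs_tail; eauto.
    intros w [w' [Hw' ?]]; subst. destruct (HU' _ Hw') as [tt [Ht' Ht'']].
    exists (BCons v tt); split; eauto. eapply lsb_cons; eauto.
Qed.

Lemma lift1_inv :
  (forall t d vs w, lsub (S d) (rlift 1 0 t) vs w -> exists u, lsub d t vs u /\ w = rlift 1 0 u) /\
  (forall t d vs w, lsubv (S d) (vlift 1 0 t) vs w -> exists u, lsubv d t vs u /\ w = vlift 1 0 u).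
Proof.
  split; intros.
  - rewrite <- Nat.add_1_r in H. eapply lsub_lift_below_inv in H; eauto. lia.
  - rewrite <- Nat.add_1_r in H. eapply lsub_lift_below_inv in H; eauto. lia.
Qed.

Lemma subst_step_cov :
  (forall t T, rstep t T -> forall d vs t' w, T t' -> lsub d t' vs w ->
     exists u U, lsub d t vs u /\ rstep u U /\ U w) /\
  (forall t T, rvstep t T -> forall d vs t' w, T t' -> lsubv d t' vs w ->
     exists u U, lsubv d t vs u /\ rvstep u U /\ U w) /\
  (forall t T, rbstep t T -> forall d vs t' w, T t' -> lsubb d t' vs w ->
     exists u U, lsubb d t vs u /\ rbstep u U /\ U w).
Proof.
  apply rstep_all.
  -
    intros r c d vs t' w H1 H2.
    destruct (proj1 comp2 r 0 d _ _ H1 _ _ H2) as [vs1 [vs2 [r' [cs' [P [Hr [HL Hw]]]]]]].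
    destruct (LSp_lsubb _ _ _ _ HL) as [c' [Hc Pc]].
    exists (RApp (RBag (sing (RLam r'))) (RBag c')), (fun w => lsub 0 r' (bag_list c') w).
    split; [|split].
    + apply ls_app with (vs1 := vs1) (vs2 := vs2); [exact P | constructor; apply lsb_cons with (vs1 := vs1) (vs2 := []); [rewrite app_nil_r; apply Permutation_refl | constructor; exact Hr | constructor] | constructor; exact Hc].
    + apply rs_beta.
    + eapply lsub_perm; eauto. apply Permutation_sym; auto.
  - intros b u0 Hl d vs t' w [].
  -
    intros r s1 s2 d vs t' w H1 H2. subst. inv_lsub.
    destruct (proj1 lift1_inv _ _ _ _ ltac:(eassumption)) as [s2' [Hs2 ?]]; subst.
    eexists; eexists; split; [|split; [apply rs_sigma1 | reflexivity]].
    eapply ls_app; [| | eassumption]. 2:{ eapply ls_app; [| | eassumption].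
      2:{ constructor. eapply lsb_cons; [| constructor; eassumption | constructor]. apply Permutation_refl. }
      apply Permutation_refl. }
    psolve.
  -
    intros v r s d vs t' w H1 H2. subst. inv_lsub.
    destruct (proj2 lift1_inv _ _ _ _ ltac:(eassumption)) as [vv [Hv ?]]; subst.
    eexists; eexists; split; [|split; [apply rs_sigma3 | reflexivity]].
    eapply lsub_app'. apply lsub_sing; eassumption.
    eapply lsub_app'. apply lsub_sing; constructor; eassumption. eassumption.
    apply Permutation_refl. psolve.
  -
    intros s S u0 Hs IH d vs t' w [s' [Hs' ?]] H2; subst. inv_lsub.
    destruct (IH _ _ _ _ Hs' ltac:(eassumption)) as [u1 [U1 [A1 [A2 A3]]]].
    exists (RApp u1 u'), (fun w => exists s', U1 s' /\ w = RApp s' u'). split; [|split].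
    + eapply ls_app; eauto.
    + apply rs_appl; auto.
    + eauto.
  -
    intros s u0 U0 Hs IH d vs t' w [s' [Hs' ?]] H2; subst. inv_lsub.
    destruct (IH _ _ _ _ Hs' ltac:(eassumption)) as [u1 [U1 [A1 [A2 A3]]]].
    exists (RApp s'0 u1), (fun w => exists s', U1 s' /\ w = RApp s'0 s'). split; [|split].
    + eapply ls_app; eauto.
    + apply rs_appr; auto.
    + eauto.
  -
    intros b B Hb IH d vs t' w [s' [Hs' ?]] H2; subst. inv_lsub.
    destruct (IH _ _ _ _ Hs' ltac:(eassumption)) as [u1 [U1 [A1 [A2 A3]]]].
    exists (RBag u1), (fun w => exists s', U1 s' /\ w = RBag s'). split; [|split].
    + constructor; eauto.
    + apply rs_bag; auto.
    + eauto.
  -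
    intros t T Ht IH d vs t' w [s' [Hs' ?]] H2; subst. inv_lsub.
    destruct (IH _ _ _ _ Hs' ltac:(eassumption)) as [u1 [U1 [A1 [A2 A3]]]].
    exists (RLam u1), (fun w => exists s', U1 s' /\ w = RLam s'). split; [|split].
    + constructor; eauto.
    + apply rvs_lam; auto.
    + eauto.
  -
    intros v V b Hv IH d vs t' w [s' [Hs' ?]] H2; subst. inv_lsub.
    destruct (IH _ _ _ _ Hs' ltac:(eassumption)) as [u1 [U1 [A1 [A2 A3]]]].
    exists (BCons u1 b'), (fun w => exists s', U1 s' /\ w = BCons s' b'). split; [|split].
    + eapply lsb_cons; eauto.
    + apply rbs_head; auto.
    + eauto.
  -
    intros v b B Hb IH d vs t' w [s' [Hs' ?]] H2; subst. inv_lsub.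
    destruct (IH _ _ _ _ Hs' ltac:(eassumption)) as [u1 [U1 [A1 [A2 A3]]]].
    exists (BCons v' u1), (fun w => exists s', U1 s' /\ w = BCons v' s'). split; [|split].
    + eapply lsb_cons; eauto.
    + apply rbs_tail; auto.
    + eauto.
Qed.

Lemma perm_pick (vs vs1 vs2 rest : list rval) v : Permutation vs (vs1 ++ vs2) -> Permutation vs (v :: rest) ->
  (exists r1, Permutation vs1 (v :: r1) /\ Permutation rest (r1 ++ vs2)) \/
  (exists r2, Permutation vs2 (v :: r2) /\ Permutation rest (vs1 ++ r2)).
Proof.
  intros P1 P2.
  assert (In v (vs1 ++ vs2)) as Hin.
  { eapply Permutation_in; [eapply Permutation_trans; [apply Permutation_sym; exact P2 | exact P1]|]. left; auto. }
  apply in_app_or in Hin. destruct Hin as [Hin|Hin]; apply in_split in Hin; destruct Hin as [a [b ?]]; subst.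
  - left. exists (a ++ b). split. apply Permutation_sym, Permutation_middle.
    psolve.
  - right. exists (a ++ b). split. apply Permutation_sym, Permutation_middle.
    psolve.
Qed.

Lemma perm_one_inv (x v : rval) rest : Permutation [x] (v :: rest) -> v = x /\ rest = [].
Proof. intro H. apply Permutation_length_1_inv in H. inversion H; auto. Qed.

Ltac perm_nil_cons := match goal with H : Permutation [] (_ :: _) |- _ => apply Permutation_nil_cons in H; contradiction end.

Lemma val_step :
  (forall d t vs u, lsub d t vs u -> forall v V rest, Permutation vs (v :: rest) -> rvstep v V ->
     exists U, rstep u U /\ forall w, U w -> exists v', V v' /\ lsub d t (v' :: rest) w) /\
  (forall d t vs u, lsubv d t vs u -> forall v V rest, Permutation vs (v :: rest) -> rvstep v V ->
     exists U, rvstep u U /\ forall w, U w -> exists v', V v' /\ lsubv d t (v' :: rest) w) /\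
  (forall d t vs u, lsubb d t vs u -> forall v V rest, Permutation vs (v :: rest) -> rvstep v V ->
     exists U, rbstep u U /\ forall w, U w -> exists v', V v' /\ lsubb d t (v' :: rest) w).
Proof.
  apply lsub_all.
  - intros d s u vs vs1 vs2 s' u' P Hs IHs Hu IHu v V rest P2 HV.
    destruct (perm_pick _ _ _ _ _ P P2) as [[r1 [Q1 Q2]]|[r2 [Q1 Q2]]].
    + destruct (IHs _ _ _ Q1 HV) as [U [HU HU']].
      exists (fun w => exists s0, U s0 /\ w = RApp s0 u'). split. apply rs_appl; auto.
      intros w [s0 [Hs0 ?]]; subst. destruct (HU' _ Hs0) as [v' [? ?]]. exists v'; split; auto.
      eapply lsub_app'; eauto. psolve.
    + destruct (IHu _ _ _ Q1 HV) as [U [HU HU']].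
      exists (fun w => exists s0, U s0 /\ w = RApp s' s0). split. apply rs_appr; auto.
      intros w [s0 [Hs0 ?]]; subst. destruct (HU' _ Hs0) as [v' [? ?]]. exists v'; split; auto.
      eapply lsub_app'; eauto. psolve.
  - intros d b vs b' Hb IH v V rest P2 HV.
    destruct (IH _ _ _ P2 HV) as [U [HU HU']].
    exists (fun w => exists s0, U s0 /\ w = RBag s0). split. apply rs_bag; auto.
    intros w [s0 [Hs0 ?]]; subst. destruct (HU' _ Hs0) as [v' [? ?]]. exists v'; split; auto. constructor; auto.
  - intros d x v V rest P2 HV. apply perm_one_inv in P2. destruct P2; subst.
    exists (fun w => exists v', V v' /\ w = vlift d 0 v'). split.
    apply (proj1 (proj2 rstep_lift)); auto.
    intros w [v' [Hv ?]]; subst. exists v'; split; auto. constructor.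
  - intros; perm_nil_cons.
  - intros; perm_nil_cons.
  - intros d t vs t' Ht IH v V rest P2 HV.
    destruct (IH _ _ _ P2 HV) as [U [HU HU']].
    exists (fun w => exists s0, U s0 /\ w = RLam s0). split. apply rvs_lam; auto.
    intros w [s0 [Hs0 ?]]; subst. destruct (HU' _ Hs0) as [v' [? ?]]. exists v'; split; auto. constructor; auto.
  - intros; perm_nil_cons.
  - intros d s u vs vs1 vs2 s' u' P Hs IHs Hu IHu v V rest P2 HV.
    destruct (perm_pick _ _ _ _ _ P P2) as [[r1 [Q1 Q2]]|[r2 [Q1 Q2]]].
    + destruct (IHs _ _ _ Q1 HV) as [U [HU HU']].
      exists (fun w => exists s0, U s0 /\ w = BCons s0 u'). split. apply rbs_head; auto.
      intros w [s0 [Hs0 ?]]; subst. destruct (HU' _ Hs0) as [v' [? ?]]. exists v'; split; auto.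
      eapply lsb_cons; [| eassumption | eassumption]. psolve.
    + destruct (IHu _ _ _ Q1 HV) as [U [HU HU']].
      exists (fun w => exists s0, U s0 /\ w = BCons s' s0). split. apply rbs_tail; auto.
      intros w [s0 [Hs0 ?]]; subst. destruct (HU' _ Hs0) as [v' [? ?]]. exists v'; split; auto.
      eapply lsb_cons; [| eassumption | eassumption]. psolve.
Qed.

Lemma val_step_cov :
  (forall d t vs w, lsub d t vs w -> forall v' rest, Permutation vs (v' :: rest) -> forall v V, V v' -> rvstep v V ->
     exists u U, lsub d t (v :: rest) u /\ rstep u U /\ U w) /\
  (forall d t vs w, lsubv d t vs w -> forall v' rest, Permutation vs (v' :: rest) -> forall v V, V v' -> rvstep v V ->
     exists u U, lsubv d t (v :: rest) u /\ rvstep u U /\ U w) /\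
  (forall d t vs w, lsubb d t vs w -> forall v' rest, Permutation vs (v' :: rest) -> forall v V, V v' -> rvstep v V ->
     exists u U, lsubb d t (v :: rest) u /\ rbstep u U /\ U w).
Proof.
  apply lsub_all.
  - intros d s u vs vs1 vs2 s' u' P Hs IHs Hu IHu v' rest P2 v V HV Hv.
    destruct (perm_pick _ _ _ _ _ P P2) as [[r1 [Q1 Q2]]|[r2 [Q1 Q2]]].
    + destruct (IHs _ _ Q1 _ _ HV Hv) as [u1 [U1 [A1 [A2 A3]]]].
      exists (RApp u1 u'), (fun w => exists s0, U1 s0 /\ w = RApp s0 u'). split; [|split; [apply rs_appl; auto | eauto]].
      eapply lsub_app'; eauto. psolve.
    + destruct (IHu _ _ Q1 _ _ HV Hv) as [u1 [U1 [A1 [A2 A3]]]].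
      exists (RApp s' u1), (fun w => exists s0, U1 s0 /\ w = RApp s' s0). split; [|split; [apply rs_appr; auto | eauto]].
      eapply lsub_app'; eauto. psolve.
  - intros d b vs b' Hb IH v' rest P2 v V HV Hv.
    destruct (IH _ _ P2 _ _ HV Hv) as [u1 [U1 [A1 [A2 A3]]]].
    exists (RBag u1), (fun w => exists s0, U1 s0 /\ w = RBag s0). split; [|split; [apply rs_bag; auto | eauto]].
    constructor; auto.
  - intros d x v' rest P2 v V HV Hv. apply perm_one_inv in P2. destruct P2; subst.
    exists (vlift d 0 v), (fun w => exists v', V v' /\ w = vlift d 0 v'). split; [constructor|split].
    apply (proj1 (proj2 rstep_lift)); auto. eauto.
  - intros; perm_nil_cons.
  - intros; perm_nil_cons.
  - intros d t vs t' Ht IH v' rest P2 v V HV Hv.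
    destruct (IH _ _ P2 _ _ HV Hv) as [u1 [U1 [A1 [A2 A3]]]].
    exists (RLam u1), (fun w => exists s0, U1 s0 /\ w = RLam s0). split; [|split; [apply rvs_lam; auto | eauto]].
    constructor; auto.
  - intros; perm_nil_cons.
  - intros d s u vs vs1 vs2 s' u' P Hs IHs Hu IHu v' rest P2 v V HV Hv.
    destruct (perm_pick _ _ _ _ _ P P2) as [[r1 [Q1 Q2]]|[r2 [Q1 Q2]]].
    + destruct (IHs _ _ Q1 _ _ HV Hv) as [u1 [U1 [A1 [A2 A3]]]].
      exists (BCons u1 u'), (fun w => exists s0, U1 s0 /\ w = BCons s0 u'). split; [|split; [apply rbs_head; auto | eauto]].
      eapply lsb_cons; [| eassumption | eassumption]. psolve.
    + destruct (IHu _ _ Q1 _ _ HV Hv) as [u1 [U1 [A1 [A2 A3]]]].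
      exists (BCons s' u1), (fun w => exists s0, U1 s0 /\ w = BCons s' s0). split; [|split; [apply rbs_tail; auto | eauto]].
      eapply lsb_cons; [| eassumption | eassumption]. psolve.
Qed.

Fixpoint tsize (t : rterm) : nat :=
  match t with RApp s u => 1 + tsize s + tsize u | RBag b => 1 + bsize b end
with vsize (v : rval) : nat :=
  match v with RVar _ => 1 | RLam t => 1 + tsize t end
with bsize (b : rbag) : nat :=
  match b with BNil => 0 | BCons v b => vsize v + bsize b end.

Fixpoint tpi (t : rterm) : nat :=
  match t with RApp s u => tpi s * tpi u | RBag b => 2 + bpi b end
with vpi (v : rval) : nat :=
  match v with RVar _ => 2 | RLam t => tpi t + 1 end
with bpi (b : rbag) : nat :=
  match b with BNil => 0 | BCons v b => vpi v + bpi b end.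

Definition vsum (l : list rval) := fold_right (fun v n => vsize v + n) 0 l.

Lemma size_lift :
  (forall t k c, tsize (rlift k c t) = tsize t /\ tpi (rlift k c t) = tpi t) /\
  (forall v k c, vsize (vlift k c v) = vsize v /\ vpi (vlift k c v) = vpi v) /\
  (forall b k c, bsize (blift k c b) = bsize b /\ bpi (blift k c b) = bpi b).
Proof.
  apply rtvb_ind; intros; simpl.
  - destruct (H k c), (H0 k c); lia.
  - destruct (H k c); lia.
  - destruct (c <=? n); simpl; lia.
  - destruct (H k (S c)); lia.
  - lia.
  - destruct (H k c), (H0 k c); lia.
Qed.

Lemma pi_pos :
  (forall t, 2 <= tpi t) /\ (forall v, 2 <= vpi v) /\ (forall b, 0 <= bpi b).
Proof. apply rtvb_ind; intros; simpl; nia. Qed.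

Lemma vsum_app l1 l2 : vsum (l1 ++ l2) = vsum l1 + vsum l2.
Proof. induction l1; simpl; lia. Qed.

Lemma vsum_perm l1 l2 : Permutation l1 l2 -> vsum l1 = vsum l2.
Proof. induction 1; simpl; lia. Qed.

Lemma lsub_size :
  (forall d t vs u, lsub d t vs u -> tsize u + length vs = tsize t + vsum vs) /\
  (forall d t vs u, lsubv d t vs u -> vsize u + length vs = vsize t + vsum vs) /\
  (forall d t vs u, lsubb d t vs u -> bsize u + length vs = bsize t + vsum vs).
Proof.
  apply lsub_all; intros; simpl in *.
  - rewrite (Permutation_length p), (vsum_perm _ _ p), length_app, vsum_app. lia.
  - lia.
  - destruct (proj1 (proj2 size_lift) v d 0). lia.
  - lia.
  - lia.
  - lia.
  - lia.
  - rewrite (Permutation_length p), (vsum_perm _ _ p), length_app, vsum_app. lia.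
Qed.

Lemma bsize_vsum b : bsize b = vsum (bag_list b).
Proof. induction b; simpl; lia. Qed.

Definition lt_mu (x y : rterm) := tsize x < tsize y \/ (tsize x = tsize y /\ tpi x < tpi y).

Lemma mu_ind (P : rterm -> Prop) : (forall x, (forall y, lt_mu y x -> P y) -> P x) -> forall x, P x.
Proof.
  intros H.
  assert (forall n m x, tsize x <= n -> tpi x <= m -> P x).
  { induction n as [n IHn] using lt_wf_ind. induction m as [m IHm] using lt_wf_ind.
    intros x Hs Hp. apply H. intros y [Hy|[Hy1 Hy2]].
    - apply (IHn (tsize y)) with (m := tpi y); lia.
    - apply (IHm (tpi y)); lia. }
  intro x. apply (H0 (tsize x) (tpi x)); lia.
Qed.

Lemma lt_mu_trans x y z : lt_mu x y -> lt_mu y z -> lt_mu x z.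
Proof. unfold lt_mu; lia. Qed.

Lemma sn_step :
  (forall t T, rstep t T -> forall y, T y -> lt_mu y t) /\
  (forall v V, rvstep v V -> forall y, V y -> vsize y < vsize v \/ (vsize y = vsize v /\ vpi y < vpi v)) /\
  (forall b B, rbstep b B -> forall y, B y -> bsize y < bsize b \/ (bsize y = bsize b /\ bpi y < bpi b)).
Proof.
  pose proof pi_pos as [P1 [P2 P3]].
  apply rstep_all; unfold lt_mu; intros.
  - apply (proj1 lsub_size) in H. rewrite <- bsize_vsum in H. unfold sing; simpl. left. lia.
  - destruct H.
  - subst. unfold sing; simpl. destruct (proj1 size_lift s2 1 0). right. split. lia.
    rewrite H0. pose proof (P1 t); pose proof (P1 s1); pose proof (P1 s2). nia.
  - subst. unfold sing; simpl. destruct (proj1 (proj2 size_lift) v 1 0). right. split. lia.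
    rewrite H0. pose proof (P1 t); pose proof (P2 v); pose proof (P1 s). nia.
  - destruct H0 as [s' [Hs ?]]; subst. apply H in Hs. simpl. pose proof (P1 s'); pose proof (P1 s); pose proof (P1 u). nia.
  - destruct H0 as [s' [Hs ?]]; subst. apply H in Hs. simpl. pose proof (P1 s'); pose proof (P1 s); pose proof (P1 u). nia.
  - destruct H0 as [s' [Hs ?]]; subst. apply H in Hs. simpl. lia.
  - destruct H0 as [s' [Hs ?]]; subst. apply H in Hs. simpl. lia.
  - destruct H0 as [s' [Hs ?]]; subst. apply H in Hs. simpl. lia.
  - destruct H0 as [s' [Hs ?]]; subst. apply H in Hs. simpl. lia.
Qed.

Inductive red : rterm -> rset -> Prop :=
| red0 e (F : rset) : (forall t, F t <-> t = e) -> red e F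
| red1 e E (F : rset) : rstep e E ->
    (forall y, E y -> exists Y, red y Y /\ forall t, Y t -> F t) ->
    (forall t, F t -> exists y Y, E y /\ red y Y /\ Y t) -> red e F.

Definition join (A G : rset) : Prop :=
  (forall y, A y -> exists Y, red y Y /\ forall t, Y t -> G t) /\
  (forall t, G t -> exists y Y, A y /\ red y Y /\ Y t).

Definition LC_prop := forall e E1 E2, rstep e E1 -> rstep e E2 -> exists G, join E1 G /\ join E2 G.

Definition nf (x : rterm) : rset := fun t => exists F, red x F /\ set_normal F /\ F t.
Definition nfs (A : rset) : rset := fun t => exists x, A x /\ nf x t.

Definition UNI x := forall F1 F2, red x F1 -> set_normal F1 -> red x F2 -> set_normal F2 -> forall t, F1 t -> F2 t.

Lemma sn x E y : rstep x E -> E y -> lt_mu y x.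
Proof. intros; eapply sn_step; eauto. Qed.

Lemma red_refl x : red x (fun t => t = x).
Proof. constructor; tauto. Qed.

Lemma red_step1 x E : rstep x E -> red x E.
Proof.
  intro H. apply red1 with E; auto.
  - intros y Hy. exists (fun t => t = y). split. apply red_refl. intros; subst; auto.
  - intros t Ht. exists t, (fun u => u = t). repeat split; auto. apply red_refl.
Qed.

Lemma red_chain1 x y Y : rstep x (eq y) -> red y Y -> red x Y.
Proof.
  intros H1 H2. apply red1 with (eq y); auto.
  - intros y' Hy; subst. exists Y; auto.
  - intros t Ht. exists y, Y; auto.
Qed.

Lemma WN x : exists F, red x F /\ set_normal F.
Proof.
  induction x as [x IH] using mu_ind.
  destruct (classic (rnormal x)) as [Hn|Hn].
  - exists (fun t => t = x). split. apply red_refl. intros t Ht; subst; auto.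
  - unfold rnormal in Hn. apply not_all_ex_not in Hn. destruct Hn as [E HE].
    apply NNPP in HE.
    exists (fun t => exists y Y, E y /\ red y Y /\ set_normal Y /\ Y t). split.
    + apply red1 with E; auto.
      * intros y Hy. destruct (IH y (sn _ _ _ HE Hy)) as [Y [HY1 HY2]].
        exists Y; split; auto. intros t Ht. exists y, Y; auto.
      * intros t [y [Y [? [? [? ?]]]]]. exists y, Y; auto.
    + intros t [y [Y [? [? [? ?]]]]]. eauto.
Qed.

Lemma normal_nf x : rnormal x -> forall t, nf x t <-> t = x.
Proof.
  intros Hn t; split.
  - intros [F [HF [HN Ht]]]. inversion HF; subst.
    + apply H; auto.
    + exfalso. eapply Hn; eauto.
  - intros ->. exists (fun t => t = x). split. apply red_refl. split; auto.
    intros t Ht; subst; auto.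
Qed.

Lemma nf_normal x : set_normal (nf x).
Proof. intros t [F [? [? ?]]]. eauto. Qed.

Lemma step_nf_gen x E : UNI x -> rstep x E -> forall t, nf x t <-> nfs E t.
Proof.
  intros U HE.
  assert (R : red x (nfs E)).
  { apply red1 with E; auto.
    - intros y Hy. destruct (WN y) as [Y [HY1 HY2]]. exists Y; split; auto.
      intros t Ht. exists y; split; auto. exists Y; auto.
    - intros t [y [Hy [F [HF [HN Ht]]]]]. exists y, F; auto. }
  assert (N : set_normal (nfs E)).
  { intros t [y [Hy Ht]]. eapply nf_normal; eauto. }
  intro t; split.
  - intros [F [HF [HN Ht]]]. eapply U; eauto.
  - intros Ht. exists (nfs E); auto.
Qed.

Lemma K_gen x : (forall y, lt_mu y x -> UNI y) ->
  forall y, lt_mu y x -> forall Y, red y Y -> forall t, nf y t <-> nfs Y t.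
Proof.
  intros HU y. induction y as [y IH] using mu_ind. intros Hyx Y HY t.
  inversion HY; subst.
  - split.
    + intro Ht. exists y; split; auto. apply H; auto.
    + intros [z [Hz Ht]]. apply H in Hz; subst; auto.
  - rewrite (step_nf_gen y E (HU y Hyx) H). split.
    + intros [z [Hz Ht]]. destruct (H0 z Hz) as [Z [HZ1 HZ2]].
      assert (lt_mu z y) by (eapply sn; eauto).
      apply (IH z H2 (lt_mu_trans _ _ _ H2 Hyx) Z HZ1) in Ht.
      destruct Ht as [w [Hw Ht]]. exists w; split; auto.
    + intros [w [Hw Ht]]. destruct (H1 w Hw) as [z [Z [Hz [HZ Hzw]]]].
      assert (lt_mu z y) by (eapply sn; eauto).
      exists z; split; auto. apply (IH z H2 (lt_mu_trans _ _ _ H2 Hyx) Z HZ). exists w; auto.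
Qed.

Lemma UNI_all : LC_prop -> forall x, UNI x.
Proof.
  intro LC. induction x as [x IH] using mu_ind.
  assert (K : forall y, lt_mu y x -> forall Y, red y Y -> forall t, nf y t <-> nfs Y t)
    by (apply K_gen; auto).
  assert (Split : forall E F, rstep x E -> red x F -> set_normal F ->
     (forall y, E y -> exists Y, red y Y /\ forall t, Y t -> F t) ->
     (forall t, F t -> exists y Y, E y /\ red y Y /\ Y t) -> forall t, F t <-> nfs E t).
  { intros E F HE HF HN H1 H2 t. split.
    - intros Ht. destruct (H2 t Ht) as [y [Y [Hy [HY HYt]]]]. exists y; split; auto.
      apply (K y (sn _ _ _ HE Hy) Y HY). exists t; split; auto.
      apply normal_nf; auto.
    - intros [y [Hy Ht]]. destruct (H1 y Hy) as [Y [HY HYF]].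
      apply (K y (sn _ _ _ HE Hy) Y HY) in Ht. destruct Ht as [w [Hw Ht]].
      apply normal_nf in Ht; [subst; auto|]. apply HN; auto. }
  intros F1 F2 HF1 HN1 HF2 HN2 t Ht.
  inversion HF1; subst; inversion HF2; subst.
  - apply H0. apply H in Ht; auto.
  - exfalso. assert (rnormal x) by (apply HN1, H; auto). eapply H3; eauto.
  - exfalso. assert (rnormal x) by (apply HN2, H2; auto). eapply H3; eauto.
  - destruct (LC x E E0 H H2) as [G [[J1 J2] [J3 J4]]].
    apply (Split E0 F2 H2 HF2 HN2 H3 H4).
    apply (Split E F1 H HF1 HN1 H0 H1) in Ht.
    assert (forall A, rstep x A -> join A G -> forall t, nfs A t <-> nfs G t) as JG.
    { intros A HA [Ja Jb] u. split.
      - intros [y [Hy Hu]]. destruct (Ja y Hy) as [Y [HY HYG]].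
        apply (K y (sn _ _ _ HA Hy) Y HY) in Hu. destruct Hu as [w [Hw Hu]].
        exists w; split; auto.
      - intros [g [Hg Hu]]. destruct (Jb g Hg) as [y [Y [Hy [HY HYg]]]].
        exists y; split; auto. apply (K y (sn _ _ _ HA Hy) Y HY). exists g; auto. }
    apply (JG E0 H2 (conj J3 J4)). apply (JG E H (conj J1 J2)). auto.
Qed.

Definition img {X} (C : X -> rterm) (A : X -> Prop) : rset := fun w => exists x, A x /\ w = C x.

Fixpoint lbag (l : list rval) : rbag := match l with [] => BNil | v :: l => BCons v (lbag l) end.
Lemma bag_list_lbag l : bag_list (lbag l) = l.
Proof. induction l; simpl; f_equal; auto. Qed.
Lemma lbag_bag_list b : lbag (bag_list b) = b.
Proof. induction b; simpl; f_equal; auto. Qed.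

Lemma img_img {X Y} (C : Y -> rterm) (D : X -> Y) (A : X -> Prop) :
  (fun w => exists y, (exists x, A x /\ y = D x) /\ w = C y) = img (fun x => C (D x)) A.
Proof. apply set_ext; intro w; split.
  - intros [y [[x [? ?]] ?]]; subst. exists x; auto.
  - intros [x [? ?]]; subst. exists (D x); split; eauto. Qed.

Lemma img_eq {X} (C : X -> rterm) x : img C (eq x) = eq (C x).
Proof. apply set_ext; intro w; split.
  - intros [y [? ?]]; subst; auto.
  - intros <-. exists x; auto. Qed.

Lemma st_appl s S u : rstep s S -> rstep (RApp s u) (img (fun x => RApp x u) S).
Proof. intro; apply rs_appl; auto. Qed.
Lemma st_appr s u U : rstep u U -> rstep (RApp s u) (img (fun x => RApp s x) U).
Proof. intro; apply rs_appr; auto. Qed.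

Lemma st_bagpos l1 l2 t T : rstep t T ->
  rstep (RBag (lbag (l1 ++ RLam t :: l2))) (img (fun x => RBag (lbag (l1 ++ RLam x :: l2))) T).
Proof.
  intro H.
  assert (forall k, rbstep (lbag (k ++ RLam t :: l2)) (fun b => exists x, T x /\ b = lbag (k ++ RLam x :: l2))).
  { intro k; induction k as [|a k IH]; simpl.
    - eapply rbstep_conv. apply rbs_head. apply rvs_lam. exact H.
      intro b; split.
      + intros [v' [[t' [? ?]] ?]]; subst. eauto.
      + intros [x [? ?]]; subst. eauto.
    - eapply rbstep_conv. apply rbs_tail. exact IH.
      intro b; split.
      + intros [b' [[x [? ?]] ?]]; subst. eauto.
      + intros [x [? ?]]; subst. eauto. }
  eapply rstep_conv. apply rs_bag. apply H0.
  intro w; split.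
  + intros [b' [[x [? ?]] ?]]; subst. exists x; auto.
  + intros [x [? ?]]; subst. eauto.
Qed.

Lemma st_sing t T : rstep t T -> rstep (RBag (sing (RLam t))) (img (fun x => RBag (sing (RLam x))) T).
Proof. intro H. apply (st_bagpos [] [] t T H). Qed.

Lemma st_singv v V : rvstep v V -> rstep (RBag (sing v)) (img (fun x => RBag (sing x)) V).
Proof.
  intro H. eapply rstep_conv. apply rs_bag. apply rbs_head. exact H.
  intro w; split.
  - intros [b' [[v' [? ?]] ?]]; subst. exists v'; auto.
  - intros [x [? ?]]; subst. eauto.
Qed.

Inductive rroot : rterm -> rset -> Prop :=
| rr_beta t b : rroot (RApp (RBag (sing (RLam t))) (RBag b)) (fun u => lsub 0 t (bag_list b) u)
| rr_zero b u : length (bag_list b) <> 1 -> rroot (RApp (RBag b) u) (fun _ => False)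
| rr_sigma1 t s1 s2 : rroot (RApp (RApp (RBag (sing (RLam t))) s1) s2)
          (eq (RApp (RBag (sing (RLam (RApp t (rlift 1 0 s2))))) s1))
| rr_sigma3 v t s : rroot (RApp (RBag (sing v)) (RApp (RBag (sing (RLam t))) s))
          (eq (RApp (RBag (sing (RLam (RApp (RBag (sing (vlift 1 0 v))) t)))) s)).

Lemma rroot_step e E : rroot e E -> rstep e E.
Proof. destruct 1; constructor; auto. Qed.

Lemma rstep_app_inv s u E : rstep (RApp s u) E ->
  rroot (RApp s u) E \/ (exists S, rstep s S /\ E = img (fun x => RApp x u) S) \/
  (exists U, rstep u U /\ E = img (fun x => RApp s x) U).
Proof.
  intro H. inversion H; subst.
  - left; constructor.
  - left; constructor; auto.
  - left; constructor.
  - left; constructor.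
  - right; left. exists S; split; auto.
  - right; right. exists U; split; auto.
Qed.

Lemma rroot_det e E1 E2 : rroot e E1 -> rroot e E2 -> E1 = E2.
Proof.
  intros H1 H2. destruct H1; inversion H2; subst; auto; simpl in *; try (exfalso; auto; fail);
  try discriminate.
Qed.

Lemma rbstep_inv b : forall B, rbstep b B -> exists l1 t l2 T, bag_list b = l1 ++ RLam t :: l2 /\ rstep t T /\
  B = (fun b' => exists x, T x /\ b' = lbag (l1 ++ RLam x :: l2)).
Proof.
  induction b as [|v b IH]; intros B H; inversion H; subst.
  - inversion H3; subst. exists [], t, (bag_list b), T. simpl. repeat split; auto.
    apply set_ext; intro w; split.
    + intros [v' [[t' [? ?]] ?]]; subst. exists t'; split; auto. rewrite lbag_bag_list; auto.
    + intros [x [? ?]]; subst. rewrite lbag_bag_list. eauto.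
  - destruct (IH _ H3) as [l1 [t [l2 [T [E1 [E2 E3]]]]]]; subst.
    exists (v :: l1), t, l2, T. simpl. rewrite E1. repeat split; auto.
    apply set_ext; intro w; split.
    + intros [b' [[x [? ?]] ?]]; subst. eauto.
    + intros [x [? ?]]; subst. eauto.
Qed.

Lemma rstep_bag_inv b E : rstep (RBag b) E -> exists l1 t l2 T, bag_list b = l1 ++ RLam t :: l2 /\ rstep t T /\
  E = img (fun x => RBag (lbag (l1 ++ RLam x :: l2))) T.
Proof.
  intro H. inversion H; subst. destruct (rbstep_inv _ _ H1) as [l1 [t [l2 [T [E1 [E2 E3]]]]]]; subst.
  exists l1, t, l2, T. repeat split; auto. apply set_ext; intro w; split.
  - intros [b' [[x [? ?]] ?]]; subst. exists x; auto.
  - intros [x [? ?]]; subst. eauto.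
Qed.

Lemma rstep_sing_inv v E : rstep (RBag (sing v)) E -> exists t T, v = RLam t /\ rstep t T /\
  E = img (fun x => RBag (sing (RLam x))) T.
Proof.
  intro H. apply rstep_bag_inv in H. destruct H as [l1 [t [l2 [T [E1 [E2 E3]]]]]]; subst.
  destruct l1 as [|a l1]; simpl in E1; inversion E1; subst.
  - exists t, T. repeat split; auto.
  - destruct l1; discriminate.
Qed.

Lemma rbstep_length b B : rbstep b B -> forall b', B b' -> length (bag_list b') = length (bag_list b).
Proof.
  intros H b' Hb. destruct (rbstep_inv _ _ H) as [l1 [t [l2 [T [E1 [E2 E3]]]]]]; subst.
  destruct Hb as [x [? ?]]; subst. rewrite bag_list_lbag, E1. rewrite !length_app; simpl; auto.
Qed.

Lemma red_ctx (C : rterm -> rterm) : (forall x X, rstep x X -> rstep (C x) (img C X)) ->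
  forall x X, red x X -> red (C x) (img C X).
Proof.
  intro HC. induction x as [x IH] using mu_ind. intros X HX. inversion HX; subst.
  - constructor. intro t; split.
    + intros [y [Hy ?]]; subst. apply H in Hy; subst; auto.
    + intros ->. exists x; split; auto. apply H; auto.
  - apply red1 with (img C E). apply HC; auto.
    + intros y' [y [Hy ?]]; subst. destruct (H0 y Hy) as [Y [HY1 HY2]].
      exists (img C Y); split. apply IH; auto. eapply sn; eauto.
      intros t [z [Hz ?]]; subst. exists z; auto.
    + intros t [z [Hz ?]]; subst. destruct (H1 z Hz) as [y [Y [Hy [HY Hz']]]].
      exists (C y), (img C Y). split. exists y; auto. split. apply IH; auto. eapply sn; eauto.
      exists z; auto.
Qed.

Lemma join_img (C : rterm -> rterm) : (forall x X, rstep x X -> rstep (C x) (img C X)) ->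
  forall A G, join A G -> join (img C A) (img C G).
Proof.
  intros HC A G [J1 J2]. split.
  - intros y' [y [Hy ?]]; subst. destruct (J1 y Hy) as [Y [HY1 HY2]].
    exists (img C Y). split. apply red_ctx; auto. intros t [z [Hz ?]]; subst. exists z; auto.
  - intros t [g [Hg ?]]; subst. destruct (J2 g Hg) as [y [Y [Hy [HY Hg']]]].
    exists (C y), (img C Y). split. exists y; auto. split. apply red_ctx; auto. exists g; auto.
Qed.

Lemma join_refl A : join A A.
Proof.
  split.
  - intros y Hy. exists (fun t => t = y). split. apply red_refl. intros; subst; auto.
  - intros t Ht. exists t, (fun u => u = t). repeat split; auto. apply red_refl.
Qed.

Lemma join_steps (A G : rset) :
  (forall y, A y -> exists Y, rstep y Y /\ forall t, Y t -> G t) ->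
  (forall t, G t -> exists y Y, A y /\ rstep y Y /\ Y t) -> join A G.
Proof.
  intros H1 H2. split.
  - intros y Hy. destruct (H1 y Hy) as [Y [? ?]]. exists Y; split; auto. apply red_step1; auto.
  - intros t Ht. destruct (H2 t Ht) as [y [Y [? [? ?]]]]. exists y, Y; repeat split; auto. apply red_step1; auto.
Qed.

Definition joinable (E1 E2 : rset) := exists G, join E1 G /\ join E2 G.

Lemma joinable_sym E1 E2 : joinable E1 E2 -> joinable E2 E1.
Proof. intros [G [? ?]]; exists G; auto. Qed.

Lemma img_img' {X} (C : rterm -> rterm) (D : X -> rterm) (A : X -> Prop) :
  img C (img D A) = img (fun x => C (D x)) A.
Proof. apply img_img. Qed.

Definition ctx (C : rterm -> rterm) := forall x X, rstep x X -> rstep (C x) (img C X).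
Lemma ctx_appl u : ctx (fun x => RApp x u). Proof. intros ? ? ?; apply st_appl; auto. Qed.
Lemma ctx_appr s : ctx (fun x => RApp s x). Proof. intros ? ? ?; apply st_appr; auto. Qed.
Lemma ctx_sing : ctx (fun x => RBag (sing (RLam x))). Proof. intros ? ? ?; apply st_sing; auto. Qed.
Lemma ctx_comp C D : ctx C -> ctx D -> ctx (fun x => C (D x)).
Proof. intros HC HD x X H. rewrite <- img_img'. apply HC, HD, H. Qed.

Ltac ctxt := repeat match goal with
  | |- ctx (fun x => RApp x ?u) => apply ctx_appl
  | |- ctx (fun x => RApp ?s x) => apply ctx_appr
  | |- ctx (RApp ?s) => apply ctx_appr
  | |- ctx (fun x => RBag (sing (RLam x))) => apply ctx_sing
  | |- ctx (fun x => RApp ?s ?u) => first [ apply (ctx_comp (fun y => RApp y u)) | apply (ctx_comp (fun y => RApp s y)) ]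
  | |- ctx (fun x => RBag (sing (RLam ?s))) => apply (ctx_comp (fun y => RBag (sing (RLam y))))
  end.

Goal forall w s1, ctx (fun x => RApp (RBag (sing (RLam (RApp x w)))) s1).
Proof. intros. ctxt. Qed.

Lemma join_eq_ctx C x X : ctx C -> rstep x X -> join (eq (C x)) (img C X).
Proof.
  intros HC H. apply join_steps.
  - intros y <-. exists (img C X); split; auto.
  - intros t Ht. exists (C x), (img C X); auto.
Qed.

Lemma join_img_step (f g : rterm -> rterm) X : (forall x, X x -> rstep (f x) (eq (g x))) -> join (img f X) (img g X).
Proof.
  intro H. apply join_steps.
  - intros y [x [Hx ->]]. exists (eq (g x)); split; auto. intros t <-. exists x; auto.
  - intros t [x [Hx ->]]. exists (f x), (eq (g x)). repeat split; auto. exists x; auto.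
Qed.

(* the common shape: one side is a singleton reducing in a context, the other side root-steps *)
Lemma cp_generic C f x X : ctx C -> rstep x X -> (forall y, X y -> rstep (f y) (eq (C y))) ->
  joinable (eq (C x)) (img f X).
Proof.
  intros HC Hx Hf. exists (img C X). split.
  - apply join_eq_ctx; auto.
  - apply join_img_step; auto.
Qed.

Lemma ctx_lift_step C s S k c : ctx C -> rstep s S ->
  rstep (C (rlift k c s)) (img (fun x => C (rlift k c x)) S).
Proof.
  intros HC H. rewrite <- img_img'. apply HC. apply (proj1 rstep_lift); auto.
Qed.

Lemma cp_generic_lift C f s S k c : ctx C -> rstep s S -> (forall y, S y -> rstep (f y) (eq (C (rlift k c y)))) ->
  joinable (eq (C (rlift k c s))) (img f S).
Proof.
  intros HC Hx Hf. exists (img (fun x => C (rlift k c x)) S). split.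
  - apply join_steps.
    + intros y <-. eexists; split. apply ctx_lift_step; eauto. auto.
    + intros t Ht. eexists _, _. split; [reflexivity|]. split; [apply ctx_lift_step; eauto | auto].
  - apply join_img_step; auto.
Qed.

Lemma cp_s1_head t T s1 s2 : rstep t T ->
  joinable (eq (RApp (RBag (sing (RLam (RApp t (rlift 1 0 s2))))) s1))
           (img (fun x => RApp (RApp (RBag (sing (RLam x))) s1) s2) T).
Proof.
  intro H. apply (cp_generic (fun x => RApp (RBag (sing (RLam (RApp x (rlift 1 0 s2))))) s1)); auto.
  ctxt. intros; apply rs_sigma1.
Qed.

Lemma cp_s1_arg1 t s1 S1 s2 : rstep s1 S1 ->
  joinable (eq (RApp (RBag (sing (RLam (RApp t (rlift 1 0 s2))))) s1))
           (img (fun x => RApp (RApp (RBag (sing (RLam t))) x) s2) S1).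
Proof.
  intro H. apply (cp_generic (fun x => RApp (RBag (sing (RLam (RApp t (rlift 1 0 s2))))) x)); auto.
  ctxt. intros; apply rs_sigma1.
Qed.

Lemma cp_s1_arg2 t s1 s2 S2 : rstep s2 S2 ->
  joinable (eq (RApp (RBag (sing (RLam (RApp t (rlift 1 0 s2))))) s1))
           (img (fun x => RApp (RApp (RBag (sing (RLam t))) s1) x) S2).
Proof.
  intro H. apply (cp_generic_lift (fun y => RApp (RBag (sing (RLam (RApp t y)))) s1)); auto.
  ctxt. intros; apply rs_sigma1.
Qed.

Lemma cp_s3_v r R t s0 : rstep r R ->
  joinable (eq (RApp (RBag (sing (RLam (RApp (RBag (sing (vlift 1 0 (RLam r)))) t)))) s0))
           (img (fun x => RApp (RBag (sing (RLam x))) (RApp (RBag (sing (RLam t))) s0)) R).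
Proof.
  intro H. apply (cp_generic_lift (fun y => RApp (RBag (sing (RLam (RApp (RBag (sing (RLam y))) t)))) s0) _ r R 1 1); auto.
  ctxt. intros; apply rs_sigma3.
Qed.

Lemma cp_s3_body v t T s0 : rstep t T ->
  joinable (eq (RApp (RBag (sing (RLam (RApp (RBag (sing (vlift 1 0 v))) t)))) s0))
           (img (fun x => RApp (RBag (sing v)) (RApp (RBag (sing (RLam x))) s0)) T).
Proof.
  intro H. apply (cp_generic (fun y => RApp (RBag (sing (RLam (RApp (RBag (sing (vlift 1 0 v))) y)))) s0)); auto.
  ctxt. intros; apply rs_sigma3.
Qed.

Lemma cp_s3_arg v t s0 S0 : rstep s0 S0 ->
  joinable (eq (RApp (RBag (sing (RLam (RApp (RBag (sing (vlift 1 0 v))) t)))) s0))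
           (img (fun x => RApp (RBag (sing v)) (RApp (RBag (sing (RLam t))) x)) S0).
Proof.
  intro H. apply (cp_generic (fun y => RApp (RBag (sing (RLam (RApp (RBag (sing (vlift 1 0 v))) t)))) y)); auto.
  ctxt. intros; apply rs_sigma3.
Qed.

Lemma lsub_app_noocc t s vs w :
  lsub 0 (RApp t (rlift 1 0 s)) vs w <-> exists x, lsub 0 t vs x /\ w = RApp x s.
Proof.
  split.
  - intro H. inversion H; subst.
    match goal with Hh : lsub 0 (rlift 1 0 s) _ _ |- _ => destruct (proj1 lsub_noocc _ _ _ _ Hh); subst end.
    exists s'; split; auto. eapply lsub_perm; eauto. psolve.
  - intros [x [Hx ->]]. eapply ls_app; [| exact Hx | apply lsub_noocc_intro]. rewrite app_nil_r; auto.
Qed.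

Lemma lsub_noocc_app v t vs w :
  lsub 0 (RApp (RBag (sing (vlift 1 0 v))) t) vs w <-> exists x, lsub 0 t vs x /\ w = RApp (RBag (sing v)) x.
Proof.
  split.
  - intro H. inversion H; subst.
    match goal with Hh : lsub 0 (RBag (sing (vlift 1 0 v))) _ _ |- _ =>
      change (RBag (sing (vlift 1 0 v))) with (rlift 1 0 (RBag (sing v))) in Hh;
      destruct (proj1 lsub_noocc _ _ _ _ Hh); subst end.
    exists u'; split; auto. eapply lsub_perm; eauto. psolve.
  - intros [x [Hx ->]]. eapply ls_app; [| | exact Hx].
    2:{ change (RBag (sing (vlift 1 0 v))) with (rlift 1 0 (RBag (sing v))). apply lsub_noocc_intro. }
    simpl; auto.
Qed.

Lemma cp_s1_beta t c s2 :
  joinable (eq (RApp (RBag (sing (RLam (RApp t (rlift 1 0 s2))))) (RBag c)))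
           (img (fun x => RApp x s2) (fun u => lsub 0 t (bag_list c) u)).
Proof.
  eexists; split; [|apply join_refl]. apply join_steps.
  - intros y <-. eexists; split. apply rs_beta. intros w Hw. apply lsub_app_noocc in Hw. exact Hw.
  - intros w Hw. eexists _, _. split; [reflexivity|]. split. apply rs_beta. apply lsub_app_noocc. exact Hw.
Qed.

Lemma cp_s3_beta v t c :
  joinable (eq (RApp (RBag (sing (RLam (RApp (RBag (sing (vlift 1 0 v))) t)))) (RBag c)))
           (img (fun x => RApp (RBag (sing v)) x) (fun u => lsub 0 t (bag_list c) u)).
Proof.
  eexists; split; [|apply join_refl]. apply join_steps.
  - intros y <-. eexists; split. apply rs_beta. intros w Hw. apply lsub_noocc_app in Hw. exact Hw.
  - intros w Hw. eexists _, _. split; [reflexivity|]. split. apply rs_beta. apply lsub_noocc_app. exact Hw.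
Qed.

Lemma rlift_10_10 s : rlift 1 1 (rlift 1 0 s) = rlift 1 0 (rlift 1 0 s).
Proof. rewrite !(proj1 lift_lift_merge) by lia. reflexivity. Qed.
Lemma vlift_10_10 s : vlift 1 1 (vlift 1 0 s) = vlift 1 0 (vlift 1 0 s).
Proof. rewrite !(proj1 (proj2 lift_lift_merge)) by lia. reflexivity. Qed.

Lemma join_two x y X : rstep x (eq y) -> rstep y (eq X) -> join (eq x) (eq X).
Proof.
  intros H1 H2. split.
  - intros z <-. exists (eq X). split; auto. eapply red_chain1; eauto. apply red_step1; auto.
  - intros t <-. exists x, (eq X). repeat split; auto. eapply red_chain1; eauto. apply red_step1; auto.
Qed.

Lemma join_one x X : rstep x (eq X) -> join (eq x) (eq X).
Proof.
  intros H1. split.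
  - intros z <-. exists (eq X). split; auto. apply red_step1; auto.
  - intros t <-. exists x, (eq X). repeat split; auto. apply red_step1; auto.
Qed.

Lemma cp_s1_s3 t r s0 s2 :
  joinable (eq (RApp (RBag (sing (RLam (RApp t (rlift 1 0 s2))))) (RApp (RBag (sing (RLam r))) s0)))
           (img (fun x => RApp x s2) (eq (RApp (RBag (sing (RLam (RApp (RBag (sing (vlift 1 0 (RLam t)))) r)))) s0))).
Proof.
  rewrite img_eq.
  exists (eq (RApp (RBag (sing (RLam (RApp (RBag (sing (RLam (RApp (rlift 1 1 t) (rlift 1 0 (rlift 1 0 s2)))))) r)))) s0)).
  split.
  - apply join_one. pose proof (rs_sigma3 (RLam (RApp t (rlift 1 0 s2))) r s0) as HH.
    simpl in HH. rewrite rlift_10_10 in HH. exact HH.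
  - eapply join_two. apply rs_sigma1.
    pose proof (ctx_sing _ _ (rs_sigma1 (rlift 1 1 t) r (rlift 1 0 s2))) as HH.
    pose proof (ctx_appl s0 _ _ HH) as HH2. rewrite !img_eq in HH2. exact HH2.
Qed.

Lemma cp_s3_s3 v t r s' :
  joinable (eq (RApp (RBag (sing (RLam (RApp (RBag (sing (vlift 1 0 v))) t)))) (RApp (RBag (sing (RLam r))) s')))
           (img (fun x => RApp (RBag (sing v)) x) (eq (RApp (RBag (sing (RLam (RApp (RBag (sing (vlift 1 0 (RLam t)))) r)))) s'))).
Proof.
  rewrite img_eq.
  exists (eq (RApp (RBag (sing (RLam (RApp (RBag (sing (RLam (RApp (RBag (sing (vlift 1 0 (vlift 1 0 v)))) (rlift 1 1 t))))) r)))) s')).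
  split.
  - apply join_one. pose proof (rs_sigma3 (RLam (RApp (RBag (sing (vlift 1 0 v))) t)) r s') as HH.
    simpl in HH. rewrite vlift_10_10 in HH. exact HH.
  - eapply join_two. apply rs_sigma3.
    pose proof (ctx_sing _ _ (rs_sigma3 (vlift 1 0 v) (rlift 1 1 t) r)) as HH.
    pose proof (ctx_appl s' _ _ HH) as HH2. rewrite !img_eq in HH2. exact HH2.
Qed.

Lemma cp_beta_l t T b : rstep t T ->
  joinable (fun u => lsub 0 t (bag_list b) u) (img (fun x => RApp (RBag (sing (RLam x))) (RBag b)) T).
Proof.
  intro H. exists (fun w => exists t', T t' /\ lsub 0 t' (bag_list b) w). split.
  - apply join_steps.
    + intros y Hy. destruct (proj1 subst_step _ _ H _ _ _ Hy) as [U [HU HU']].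
      exists U; split; auto.
    + intros w [t' [Ht' Hw]]. destruct (proj1 subst_step_cov _ _ H _ _ _ _ Ht' Hw) as [u [U [? [? ?]]]].
      exists u, U; auto.
  - apply join_steps.
    + intros y [x [Hx ->]]. eexists; split. apply rs_beta. intros w Hw. exists x; auto.
    + intros w [t' [Ht' Hw]]. exists (RApp (RBag (sing (RLam t'))) (RBag b)), (fun u => lsub 0 t' (bag_list b) u).
      split. exists t'; auto. split; auto. apply rs_beta.
Qed.

Lemma cp_beta_r t b l1 r l2 R : bag_list b = l1 ++ RLam r :: l2 -> rstep r R ->
  joinable (fun u => lsub 0 t (bag_list b) u)
           (img (fun x => RApp (RBag (sing (RLam t))) (RBag (lbag (l1 ++ RLam x :: l2)))) R).
Proof.
  intros Eb H. rewrite Eb.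
  pose proof (rvs_lam _ _ H) as HV.
  exists (fun w => exists r', R r' /\ lsub 0 t (l1 ++ RLam r' :: l2) w). split.
  - apply join_steps.
    + intros y Hy.
      destruct (proj1 val_step _ _ _ _ Hy _ _ (l1 ++ l2) ltac:(apply Permutation_sym, Permutation_middle) HV)
        as [U [HU HU']].
      exists U; split; auto. intros w Hw. destruct (HU' w Hw) as [v' [[r' [Hr' ->]] Hw']].
      exists r'; split; auto. eapply lsub_perm; eauto. apply Permutation_middle.
    + intros w [r' [Hr' Hw]].
      destruct (proj1 val_step_cov _ _ _ _ Hw (RLam r') (l1 ++ l2) ltac:(apply Permutation_sym, Permutation_middle)
         (RLam r) (fun w => exists t', R t' /\ w = RLam t') ltac:(exists r'; auto) HV) as [u [U [Hu [HU HUw]]]].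
      exists u, U; repeat split; auto. eapply lsub_perm; eauto. apply Permutation_middle.
  - apply join_steps.
    + intros y [x [Hx ->]]. eexists; split. apply rs_beta. intros w Hw. exists x; split; auto.
      rewrite bag_list_lbag in Hw; auto.
    + intros w [r' [Hr' Hw]]. eexists _, _. split. exists r'; split; [exact Hr'| reflexivity].
      split. apply rs_beta. simpl. rewrite bag_list_lbag. auto.
Qed.

Lemma cp_zero_l b u l1 t l2 T : bag_list b = l1 ++ RLam t :: l2 -> length (bag_list b) <> 1 ->
  joinable (fun _ => False) (img (fun x => RApp (RBag (lbag (l1 ++ RLam x :: l2))) u) T).
Proof.
  intros Eb Hl. exists (fun _ => False). split.
  - apply join_steps; intros; contradiction.
  - apply join_steps; [|intros; contradiction].
    intros y [x [Hx ->]]. exists (fun _ => False). split; auto. apply rs_zero.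
    rewrite bag_list_lbag. rewrite Eb in Hl. rewrite !length_app in *. simpl in *. auto.
Qed.

Lemma cp_zero_r b U : length (bag_list b) <> 1 ->
  joinable (fun _ => False) (img (fun x => RApp (RBag b) x) U).
Proof.
  intros Hl. exists (fun _ => False). split.
  - apply join_steps; intros; contradiction.
  - apply join_steps; [|intros; contradiction].
    intros y [x [Hx ->]]. exists (fun _ => False). split; auto. apply rs_zero; auto.
Qed.

Lemma cp_comm s S u U : rstep s S -> rstep u U ->
  joinable (img (fun x => RApp x u) S) (img (fun x => RApp s x) U).
Proof.
  intros HS HU. exists (fun w => exists x y, S x /\ U y /\ w = RApp x y). split.
  - apply join_steps.
    + intros y [x [Hx ->]]. exists (img (fun z => RApp x z) U). split. apply st_appr; auto.
      intros t [z [Hz ->]]. eauto.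
    + intros t [x [y [Hx [Hy ->]]]]. exists (RApp x u), (img (fun z => RApp x z) U). split.
      exists x; auto. split. apply st_appr; auto. exists y; auto.
  - apply join_steps.
    + intros y [x [Hx ->]]. exists (img (fun z => RApp z x) S). split. apply st_appl; auto.
      intros t [z [Hz ->]]. eauto.
    + intros t [x [y [Hx [Hy ->]]]]. exists (RApp s y), (img (fun z => RApp z y) S). split.
      exists y; auto. split. apply st_appl; auto. exists x; auto.
Qed.

Lemma cp_bag_comm l1 t p s m2 T S : rstep t T -> rstep s S ->
  joinable (img (fun x => RBag (lbag (l1 ++ RLam x :: p ++ RLam s :: m2))) T)
           (img (fun y => RBag (lbag (l1 ++ RLam t :: p ++ RLam y :: m2))) S).
Proof.
  intros HT HS.
  assert (Hpos : forall x y, l1 ++ RLam x :: p ++ RLam y :: m2 = (l1 ++ RLam x :: p) ++ RLam y :: m2)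
    by (intros; rewrite <- app_assoc; reflexivity).
  exists (fun w => exists x y, T x /\ S y /\ w = RBag (lbag (l1 ++ RLam x :: p ++ RLam y :: m2))). split.
  - apply join_steps.
    + intros w [x [Hx ->]]. rewrite Hpos.
      exists (img (fun y => RBag (lbag ((l1 ++ RLam x :: p) ++ RLam y :: m2))) S). split. apply st_bagpos; auto.
      intros z [y [Hy ->]]. exists x, y; repeat split; auto. rewrite Hpos; auto.
    + intros z [x [y [Hx [Hy ->]]]].
      exists (RBag (lbag (l1 ++ RLam x :: p ++ RLam s :: m2))),
             (img (fun y => RBag (lbag ((l1 ++ RLam x :: p) ++ RLam y :: m2))) S).
      split. exists x; auto. split. rewrite Hpos. apply st_bagpos; auto. exists y; split; auto. rewrite Hpos; auto.
  - apply join_steps.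
    + intros w [y [Hy ->]].
      exists (img (fun x => RBag (lbag (l1 ++ RLam x :: p ++ RLam y :: m2))) T). split. apply st_bagpos; auto.
      intros z [x [Hx ->]]. exists x, y; repeat split; auto.
    + intros z [x [y [Hx [Hy ->]]]].
      exists (RBag (lbag (l1 ++ RLam t :: p ++ RLam y :: m2))),
             (img (fun x => RBag (lbag (l1 ++ RLam x :: p ++ RLam y :: m2))) T).
      split. exists y; auto. split. apply st_bagpos; auto. exists x; split; auto.
Qed.

Lemma cp_root_appl s u E S : rroot (RApp s u) E -> rstep s S -> joinable E (img (fun x => RApp x u) S).
Proof.
  intros HR HS. inversion HR; subst.
  - destruct (rstep_sing_inv _ _ HS) as [t0 [T [Ht [HT ->]]]]. injection Ht as ->.
    rewrite img_img'. apply cp_beta_l; auto.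
  - destruct (rstep_bag_inv _ _ HS) as [l1 [t [l2 [T [Eb [HT ->]]]]]].
    rewrite img_img'. eapply cp_zero_l; eauto.
  - destruct (rstep_app_inv _ _ _ HS) as [R1 | [[S1 [HS1 ->]] | [U1 [HU1 ->]]]].
    + inversion R1; subst.
      * apply cp_s1_beta.
      * simpl in *. congruence.
      * apply cp_s1_s3.
    + destruct (rstep_sing_inv _ _ HS1) as [t0 [T [Ht [HT ->]]]]. injection Ht as ->.
      rewrite img_img'. rewrite img_img'. apply cp_s1_head; auto.
    + rewrite img_img'. apply cp_s1_arg1; auto.
  - destruct (rstep_sing_inv _ _ HS) as [r [R [-> [HR' ->]]]].
    rewrite img_img'. apply cp_s3_v; auto.
Qed.

Lemma cp_root_appr s u E U : rroot (RApp s u) E -> rstep u U -> joinable E (img (fun x => RApp s x) U).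
Proof.
  intros HR HU. inversion HR; subst.
  - destruct (rstep_bag_inv _ _ HU) as [l1 [t0 [l2 [T [Eb [HT ->]]]]]].
    rewrite img_img'. eapply cp_beta_r; eauto.
  - apply cp_zero_r; auto.
  - apply cp_s1_arg2; auto.
  - destruct (rstep_app_inv _ _ _ HU) as [R1 | [[S1 [HS1 ->]] | [U1 [HU1 ->]]]].
    + inversion R1; subst.
      * apply cp_s3_beta.
      * simpl in *. congruence.
      * apply cp_s3_s3.
    + destruct (rstep_sing_inv _ _ HS1) as [t0 [T [Ht [HT ->]]]]. injection Ht as ->.
      rewrite img_img'. rewrite img_img'. apply cp_s3_body; auto.
    + rewrite img_img'. apply cp_s3_arg; auto.
Qed.

Lemma list_pos {X} (l1 l2 m1 m2 : list X) x y : l1 ++ x :: l2 = m1 ++ y :: m2 ->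
  (l1 = m1 /\ x = y /\ l2 = m2) \/ (exists p, m1 = l1 ++ x :: p /\ l2 = p ++ y :: m2) \/
  (exists p, l1 = m1 ++ y :: p /\ m2 = p ++ x :: l2).
Proof.
  revert m1. induction l1 as [|a l1 IH]; intros m1 E; destruct m1 as [|b m1]; simpl in *; inversion E; subst.
  - left; auto.
  - right; left. exists m1; auto.
  - right; right. exists l1; auto.
  - destruct (IH _ H1) as [[? [? ?]] | [[p [? ?]] | [p [? ?]]]]; subst.
    + left; auto.
    + right; left. exists p; auto.
    + right; right. exists p; auto.
Qed.

Lemma lt_mu_appl s u : lt_mu s (RApp s u).
Proof. left; simpl; lia. Qed.
Lemma lt_mu_appr s u : lt_mu u (RApp s u).
Proof. left; simpl; lia. Qed.
Lemma lt_mu_bag b l1 t l2 : bag_list b = l1 ++ RLam t :: l2 -> lt_mu t (RBag b).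
Proof.
  intro E. left. simpl. rewrite bsize_vsum, E, vsum_app. simpl. lia.
Qed.

Lemma ctx_bagpos l1 l2 : ctx (fun x => RBag (lbag (l1 ++ RLam x :: l2))).
Proof. intros x X H. apply st_bagpos; auto. Qed.

Lemma bag_assoc_fun l1 t p m2 :
  (fun y => RBag (lbag ((l1 ++ RLam t :: p) ++ RLam y :: m2))) = (fun y => RBag (lbag (l1 ++ RLam t :: p ++ RLam y :: m2))).
Proof. apply functional_extensionality; intro y. rewrite <- app_assoc. reflexivity. Qed.

Theorem LC : LC_prop.
Proof.
  intro e. induction e as [e IH] using mu_ind. intros E1 E2 H1 H2.
  destruct e as [s u | b].
  - destruct (rstep_app_inv _ _ _ H1) as [R1 | [[S1 [HS1 ->]] | [U1 [HU1 ->]]]];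
    destruct (rstep_app_inv _ _ _ H2) as [R2 | [[S2 [HS2 ->]] | [U2 [HU2 ->]]]].
    + rewrite (rroot_det _ _ _ R1 R2). exists E2; split; apply join_refl.
    + apply (cp_root_appl s u); auto.
    + apply (cp_root_appr s u); auto.
    + apply joinable_sym; apply (cp_root_appl s u); auto.
    + destruct (IH s (lt_mu_appl s u) S1 S2 HS1 HS2) as [G [J1 J2]].
      exists (img (fun x => RApp x u) G). split; apply join_img; auto; apply ctx_appl.
    + apply cp_comm; auto.
    + apply joinable_sym; apply (cp_root_appr s u); auto.
    + apply joinable_sym, cp_comm; auto.
    + destruct (IH u (lt_mu_appr s u) U1 U2 HU1 HU2) as [G [J1 J2]].
      exists (img (fun x => RApp s x) G). split; apply join_img; auto; apply ctx_appr.
  - destruct (rstep_bag_inv _ _ H1) as [l1 [t [l2 [T [Eb [HT ->]]]]]].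
    destruct (rstep_bag_inv _ _ H2) as [m1 [s [m2 [S [Eb' [HS ->]]]]]].
    rewrite Eb in Eb'. destruct (list_pos _ _ _ _ _ _ Eb') as [[? [? ?]] | [[p [? ?]] | [p [? ?]]]]; subst.
    + match goal with Hh : RLam _ = RLam _ |- _ => injection Hh as Hts end. subst.
      destruct (IH _ (lt_mu_bag _ _ _ _ Eb) T S HT HS) as [G [J1 J2]].
      exists (img (fun x => RBag (lbag (m1 ++ RLam x :: m2))) G). split; apply join_img; auto; apply ctx_bagpos.
    + rewrite (bag_assoc_fun l1 _ p m2). apply cp_bag_comm; auto.
    + apply joinable_sym. rewrite (bag_assoc_fun m1 _ p l2). apply cp_bag_comm; auto.
Qed.

Theorem UNI_global : forall x, UNI x.
Proof. apply UNI_all, LC. Qed.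

Lemma K_global x X : red x X -> forall t, nf x t <-> nfs X t.
Proof.
  intros H t. apply (K_gen (RApp x x)); auto.
  - intros; apply UNI_global.
  - left; simpl; lia.
Qed.

Lemma step_nf x E : rstep x E -> forall t, nf x t <-> nfs E t.
Proof. intros; apply step_nf_gen; auto. apply UNI_global. Qed.

Lemma setstep_nfs A B : setstep A B -> forall t, nfs A t <-> nfs B t.
Proof.
  intros [e [E1 [HE [Ae HB]]]] t. split.
  - intros [x [Ax Hx]]. destruct (classic (x = e)) as [->|Hne].
    + apply (step_nf _ _ HE) in Hx. destruct Hx as [y [Hy Ht]]. exists y; split; auto. apply HB; auto.
    + exists x; split; auto. apply HB; auto.
  - intros [y [By Ht]]. apply HB in By. destruct By as [Ey | [Ay _]].
    + exists e; split; auto. apply (step_nf _ _ HE). exists y; auto.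
    + exists y; auto.
Qed.

Lemma is_nf_nf e F : is_nf e F -> forall t, F t <-> nf e t.
Proof.
  intros [HR HN].
  assert (forall A B, clos_refl_trans rset setstep A B -> forall t, nfs A t <-> nfs B t).
  { induction 1; intros.
    - apply setstep_nfs; auto.
    - tauto.
    - rewrite IHclos_refl_trans1; auto. }
  intro t. specialize (H _ _ HR t). split.
  - intro Ht. assert (nfs F t) by (exists t; split; auto; apply normal_nf; auto).
    apply H in H0. destruct H0 as [x [<- Hx]]; auto.
  - intro Ht. assert (nfs (eq e) t) by (exists e; auto). apply H in H0.
    destruct H0 as [x [Fx Hx]]. apply normal_nf in Hx; [subst; auto|]. apply HN; auto.
Qed.

Definition fin {X} (A : X -> Prop) := exists l, forall x, A x <-> In x l.

Fixpoint splits {X} (l : list X) : list (list X * list X) :=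
  match l with
  | [] => [([], [])]
  | x :: l => flat_map (fun p => [(x :: fst p, snd p); (fst p, x :: snd p)]) (splits l)
  end.

Lemma splits_sound {X} (vs : list X) a b : In (a, b) (splits vs) -> Permutation vs (a ++ b).
Proof.
  revert a b. induction vs as [|x vs IH]; simpl; intros a b H.
  - destruct H as [H|[]]. inversion H; auto.
  - apply in_flat_map in H. destruct H as [[a0 b0] [Hin H]]. simpl in H.
    destruct H as [H|[H|[]]]; inversion H; subst.
    + simpl. apply perm_skip. apply IH; auto.
    + apply IH in Hin. eapply Permutation_trans. apply perm_skip. exact Hin. apply Permutation_middle.
Qed.

Lemma splits_complete {X} (vs : list X) : forall vs1 vs2, Permutation vs (vs1 ++ vs2) ->
  exists a b, In (a, b) (splits vs) /\ Permutation a vs1 /\ Permutation b vs2.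
Proof.
  induction vs as [|x vs IH]; intros vs1 vs2 P.
  - apply Permutation_nil in P. apply app_eq_nil in P. destruct P; subst. exists [], []; simpl; auto.
  - assert (In x (vs1 ++ vs2)) by (eapply Permutation_in; eauto; left; auto).
    apply in_app_or in H. destruct H as [H|H]; apply in_split in H; destruct H as [p [q ->]].
    + assert (Permutation vs ((p ++ q) ++ vs2)).
      { rewrite <- app_assoc in P. apply Permutation_cons_app_inv in P. rewrite app_assoc in P. auto. }
      destruct (IH _ _ H) as [a [b [Hin [Pa Pb]]]].
      exists (x :: a), b. split. simpl. apply in_flat_map. exists (a, b); simpl; auto.
      split; auto. eapply Permutation_trans. apply perm_skip. exact Pa. apply Permutation_middle.
    + assert (Permutation vs (vs1 ++ p ++ q)).
      { rewrite app_assoc in P. apply Permutation_cons_app_inv in P. rewrite <- app_assoc in P. auto. }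
      destruct (IH _ _ H) as [a [b [Hin [Pa Pb]]]].
      exists a, (x :: b). split. simpl. apply in_flat_map. exists (a, b); simpl; auto.
      split; auto. eapply Permutation_trans. apply perm_skip. exact Pb. apply Permutation_middle.
Qed.

Lemma fin_ext {X} (A B : X -> Prop) : fin A -> (forall x, A x <-> B x) -> fin B.
Proof. intros [l Hl] H. exists l. intro x. rewrite <- H. auto. Qed.

Lemma fin_empty {X} : fin (fun _ : X => False).
Proof. exists []. simpl; tauto. Qed.

Lemma fin_single {X} (x : X) : fin (eq x).
Proof. exists [x]. simpl; intuition. Qed.

Lemma fin_img {X Y} (f : X -> Y) (A : X -> Prop) : fin A -> fin (fun y => exists x, A x /\ y = f x).
Proof.
  intros [l Hl]. exists (map f l). intro y. rewrite in_map_iff. split.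
  - intros [x [Hx ->]]. exists x; split; auto. apply Hl; auto.
  - intros [x [<- Hx]]. exists x; split; auto. apply Hl; auto.
Qed.

Lemma fin_prod {X Y Z} (f : X -> Y -> Z) A B : fin A -> fin B ->
  fin (fun z => exists a b, A a /\ B b /\ z = f a b).
Proof.
  intros [la Ha] [lb Hb]. exists (flat_map (fun a => map (f a) lb) la). intro z.
  rewrite in_flat_map. split.
  - intros [a [b [Ha' [Hb' ->]]]]. exists a; split. apply Ha; auto. apply in_map. apply Hb; auto.
  - intros [a [Ha' Hz]]. apply in_map_iff in Hz. destruct Hz as [b [<- Hb']].
    exists a, b; repeat split; auto. apply Ha; auto. apply Hb; auto.
Qed.

Lemma fin_union_list {I X} (li : list I) (F : I -> X -> Prop) : (forall i, In i li -> fin (F i)) ->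
  fin (fun x => exists i, In i li /\ F i x).
Proof.
  induction li as [|i li IH]; intros H.
  - apply (fin_ext (fun _ => False)). apply fin_empty. simpl. firstorder.
  - destruct (H i (or_introl eq_refl)) as [l1 H1].
    destruct (IH (fun j Hj => H j (or_intror Hj))) as [l2 H2].
    exists (l1 ++ l2). intro x. rewrite in_app_iff, <- H1, <- H2. simpl. split.
    + intros [j [[<-|Hj] Hx]]; eauto.
    + intros [Hx|[j [Hj Hx]]]; eauto.
Qed.

Lemma fin_lsub :
  (forall t d vs, fin (lsub d t vs)) /\ (forall v d vs, fin (lsubv d v vs)) /\ (forall b d vs, fin (lsubb d b vs)).
Proof.
  apply rtvb_ind; intros.
  - apply (fin_ext (fun w => exists p, In p (splits vs) /\
            (fun p w => exists a b, lsub d r (fst p) a /\ lsub d r0 (snd p) b /\ w = RApp a b) p w)).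
    + apply fin_union_list. intros p _. apply fin_prod; auto.
    + intro w; split.
      * intros [[a b] [Hin [s' [u' [Hs [Hu ->]]]]]]. simpl in *. eapply ls_app; eauto. apply splits_sound; auto.
      * intro Hw. inversion Hw; subst.
        match goal with Hp : Permutation vs _ |- _ => destruct (splits_complete _ _ _ Hp) as [a [b [Hin [Pa Pb]]]] end.
        exists (a, b); split; auto. simpl. exists s', u'. repeat split; auto.
        eapply lsub_perm; eauto. apply Permutation_sym; auto. eapply lsub_perm; eauto. apply Permutation_sym; auto.
  - apply (fin_ext (fun w => exists b', lsubb d r vs b' /\ w = RBag b')).
    + apply fin_img; auto.
    + intro w; split. intros [b' [? ->]]. constructor; auto. intro Hw; inversion Hw; subst; eauto.
  - destruct (lt_eq_lt_dec n d) as [[Hlt| ->]|Hgt].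
    + destruct vs.
      * apply (fin_ext (eq (RVar n))). apply fin_single. intro w; split.
        intros <-. constructor; auto. intro Hw; inversion Hw; subst; auto; lia.
      * apply (fin_ext (fun _ => False)). apply fin_empty. intro w; split. tauto. intro Hw; inversion Hw; subst; lia.
    + destruct vs as [|v [|v2 vs]].
      * apply (fin_ext (fun _ => False)). apply fin_empty. intro w; split. tauto. intro Hw; inversion Hw; subst; lia.
      * apply (fin_ext (eq (vlift d 0 v))). apply fin_single. intro w; split.
        intros <-. constructor. intro Hw; inversion Hw; subst; auto; lia.
      * apply (fin_ext (fun _ => False)). apply fin_empty. intro w; split. tauto. intro Hw; inversion Hw; subst; lia.
    + destruct vs.
      * apply (fin_ext (eq (RVar (pred n)))). apply fin_single. intro w; split.
        intros <-. constructor; auto. intro Hw; inversion Hw; subst; auto; lia.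
      * apply (fin_ext (fun _ => False)). apply fin_empty. intro w; split. tauto. intro Hw; inversion Hw; subst; lia.
  - apply (fin_ext (fun w => exists t', lsub (S d) r vs t' /\ w = RLam t')).
    + apply fin_img; auto.
    + intro w; split. intros [t' [? ->]]. constructor; auto. intro Hw; inversion Hw; subst; eauto.
  - destruct vs.
    + apply (fin_ext (eq BNil)). apply fin_single. intro w; split. intros <-; constructor.
      intro Hw; inversion Hw; auto.
    + apply (fin_ext (fun _ => False)). apply fin_empty. intro w; split. tauto. intro Hw; inversion Hw.
  - apply (fin_ext (fun w => exists p, In p (splits vs) /\
            (fun p w => exists a b, lsubv d r (fst p) a /\ lsubb d r0 (snd p) b /\ w = BCons a b) p w)).
    + apply fin_union_list. intros p _. apply fin_prod; auto.
    + intro w; split.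
      * intros [[a b] [Hin [s' [u' [Hs [Hu ->]]]]]]. simpl in *. eapply lsb_cons; eauto. apply splits_sound; auto.
      * intro Hw. inversion Hw; subst.
        match goal with Hp : Permutation vs _ |- _ => destruct (splits_complete _ _ _ Hp) as [a [b [Hin [Pa Pb]]]] end.
        exists (a, b); split; auto. simpl. exists v', b'. repeat split; auto.
        eapply lsubv_perm; eauto. apply Permutation_sym; auto. eapply lsubb_perm; eauto. apply Permutation_sym; auto.
Qed.

Lemma fin_rstep :
  (forall t T, rstep t T -> fin T) /\ (forall v V, rvstep v V -> fin V) /\ (forall b B, rbstep b B -> fin B).
Proof.
  apply rstep_all; intros; try apply fin_img; auto.
  - apply fin_lsub.
  - apply fin_empty.
  - apply fin_single.
  - apply fin_single.
Qed.

Definition wsum (L : list (rterm * nat)) := list_sum (map snd L).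

Inductive Tsz : rterm -> nat -> Prop :=
| Tsz_norm x : rnormal x -> Tsz x 1
| Tsz_step x E L : rstep x E -> (forall y, E y <-> In y (map fst L)) ->
    Forall (fun p => Tsz (fst p) (snd p)) L -> Tsz x (S (wsum L)).

Lemma Tsz_pos x n : Tsz x n -> 1 <= n.
Proof. destruct 1; lia. Qed.

Lemma Tsz_exists x : exists n, Tsz x n.
Proof.
  induction x as [x IH] using mu_ind.
  destruct (classic (rnormal x)) as [Hn|Hn].
  - exists 1; constructor; auto.
  - unfold rnormal in Hn. apply not_all_ex_not in Hn. destruct Hn as [E HE]. apply NNPP in HE.
    destruct (proj1 fin_rstep _ _ HE) as [l Hl].
    assert (exists L, map fst L = l /\ Forall (fun p => Tsz (fst p) (snd p)) L) as [L [HL1 HL2]].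
    { assert (forall y, In y l -> exists n, Tsz y n).
      { intros y Hy. apply IH. eapply sn; eauto. apply Hl; auto. }
      clear Hl. induction l as [|y l IHl].
      - exists []; auto.
      - destruct (H y (or_introl eq_refl)) as [n Hn].
        destruct IHl as [L [? ?]]. intros; apply H; right; auto.
        exists ((y, n) :: L); simpl; split; [congruence|constructor; auto]. }
    exists (S (wsum L)). eapply Tsz_step; eauto. intro y; rewrite HL1; auto.
Qed.

Definition neqb (x : rterm) (q : rterm * nat) : bool :=
  if excluded_middle_informative (fst q = x) then false else true.

Lemma neqb_cons x y m L : filter (neqb x) ((y, m) :: L) =
  if excluded_middle_informative (y = x) then filter (neqb x) L else (y, m) :: filter (neqb x) L.
Proof. simpl. unfold neqb at 1. simpl. destruct (excluded_middle_informative (y = x)); auto. Qed.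

Lemma wsum_filter_le L x : wsum (filter (neqb x) L) <= wsum L.
Proof.
  induction L as [|[y m] L IH]; [simpl; lia|]. rewrite neqb_cons.
  destruct (excluded_middle_informative (y = x)); unfold wsum in *; simpl; lia.
Qed.

Lemma wsum_filter L x n : In (x, n) L -> wsum (filter (neqb x) L) + n <= wsum L.
Proof.
  induction L as [|[y m] L IH]; intros H; [contradiction|]. rewrite neqb_cons.
  destruct (excluded_middle_informative (y = x)) as [->|Hne].
  - destruct H as [H|H].
    + inversion H; subst. pose proof (wsum_filter_le L x). unfold wsum in *; simpl; lia.
    + specialize (IH H). unfold wsum in *; simpl; lia.
  - destruct H as [H|H]. inversion H; subst; contradiction. specialize (IH H). unfold wsum in *; simpl; lia.
Qed.

Lemma wsum_app L1 L2 : wsum (L1 ++ L2) = wsum L1 + wsum L2.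
Proof. unfold wsum. rewrite map_app, list_sum_app. auto. Qed.

Lemma in_map_fst_filter y x L : In y (map fst (filter (neqb x) L)) <-> In y (map fst L) /\ y <> x.
Proof.
  induction L as [|[z m] L IH]. simpl; tauto.
  rewrite neqb_cons. destruct (excluded_middle_informative (z = x)) as [->|Hne]; simpl.
  - rewrite IH. split; [intros [? ?]; auto | intros [[?|?] ?]; [subst; congruence | auto]].
  - rewrite IH. split.
    + intros [?|[? ?]]; [subst; auto | auto].
    + intros [[?|?] ?]; auto.
Qed.

Lemma wn_sets N : forall L (A : rset), Forall (fun p => Tsz (fst p) (snd p)) L -> wsum L <= N ->
  (forall x, A x <-> In x (map fst L)) -> exists B, clos_refl_trans rset setstep A B /\ set_normal B.
Proof.
  induction N as [|N IH]; intros L A HF HW HA.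
  all: destruct (classic (exists p, In p L /\ ~ rnormal (fst p))) as [[[x n] [Hin Hnn]]|Hall].
  - exfalso. pose proof (wsum_filter L x n Hin). rewrite Forall_forall in HF.
    pose proof (Tsz_pos _ _ (HF _ Hin)). simpl in *. lia.
  - exists A; split. apply rt_refl. intros x Ax. apply HA in Ax. apply in_map_iff in Ax.
    destruct Ax as [p [<- Hp]]. apply NNPP. intro Hn. apply Hall. eauto.
  - rewrite Forall_forall in HF. pose proof (HF _ Hin) as HT. simpl in *.
    inversion HT; subst. contradiction.
    set (L' := L0 ++ filter (neqb x) L).
    set (A' := fun y => E y \/ (A y /\ y <> x)).
    assert (Hstep : setstep A A').
    { exists x, E. repeat split; auto. apply HA. apply in_map_iff. exists (x, S (wsum L0)); auto. }
    destruct (IH L' A') as [B [HB1 HB2]].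
    + unfold L'. apply Forall_app. split; auto. apply Forall_forall. intros q Hq.
      apply filter_In in Hq. apply HF; tauto.
    + unfold L'. rewrite wsum_app. pose proof (wsum_filter _ _ _ Hin). lia.
    + intro y. unfold A', L'. rewrite map_app, in_app_iff, in_map_fst_filter, <- H0, <- HA. tauto.
    + exists B; split; auto. eapply rt_trans. apply rt_step; eauto. auto.
  - exists A; split. apply rt_refl. intros x Ax. apply HA in Ax. apply in_map_iff in Ax.
    destruct Ax as [p [<- Hp]]. apply NNPP. intro Hn. apply Hall. eauto.
Qed.

Lemma is_nf_exists e : exists F, is_nf e F.
Proof.
  destruct (Tsz_exists e) as [n Hn].
  destruct (wn_sets n [(e, n)] (eq e)) as [B [HB1 HB2]].
  - constructor; auto.
  - unfold wsum; simpl; lia.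
  - intro x; simpl; intuition.
  - exists B; split; auto.
Qed.

Lemma NFset_nfs E t : NFset E t <-> nfs E t.
Proof.
  split.
  - intros [e [F [He [HF Ht]]]]. exists e; split; auto. apply (is_nf_nf e F HF); auto.
  - intros [e [He Ht]]. destruct (is_nf_exists e) as [F HF]. exists e, F.
    split; [auto | split; [exact HF | apply (is_nf_nf e F HF); auto]].
Qed.

Lemma nf_of_red x F : red x F -> set_normal F -> forall t, F t <-> nf x t.
Proof.
  intros HR HN t. rewrite (K_global x F HR t). split.
  - intro Ht. exists t; split; auto. apply normal_nf; auto.
  - intros [y [Hy Ht]]. apply normal_nf in Ht; [subst; auto|]. apply HN; auto.
Qed.

Lemma red_nf x : exists F, red x F /\ forall t, F t <-> nf x t.
Proof.
  destruct (WN x) as [F [HR HN]]. exists F; split; auto. apply nf_of_red; auto.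
Qed.

Lemma nf_ctx C x : ctx C -> forall t, nf (C x) t <-> exists x', nf x x' /\ nf (C x') t.
Proof.
  intros HC t. destruct (red_nf x) as [F [HR HF]].
  pose proof (red_ctx C HC x F HR) as HR'.
  rewrite (K_global _ _ HR' t). split.
  - intros [y [[x' [Hx' ->]] Ht]]. exists x'; split; auto. apply HF; auto.
  - intros [x' [Hx' Ht]]. exists (C x'); split; auto. exists x'; split; auto. apply HF; auto.
Qed.

Lemma nf_app s u t : nf (RApp s u) t <-> exists s' u', nf s s' /\ nf u u' /\ nf (RApp s' u') t.
Proof.
  rewrite (nf_ctx (fun x => RApp x u) s (ctx_appl u) t). split.
  - intros [s' [Hs Ht]]. apply (nf_ctx (fun x => RApp s' x) u (ctx_appr s') t) in Ht.
    destruct Ht as [u' [Hu Ht]]. exists s', u'; auto.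
  - intros [s' [u' [Hs [Hu Ht]]]]. exists s'; split; auto.
    apply (nf_ctx (fun x => RApp s' x) u (ctx_appr s') t). exists u'; auto.
Qed.

Lemma nf_empty_app_l s u t : (forall x, ~ nf s x) -> ~ nf (RApp s u) t.
Proof. intros H Ht. apply nf_app in Ht. destruct Ht as [s' [u' [Hs _]]]. eapply H; eauto. Qed.
Lemma nf_empty_app_r s u t : (forall x, ~ nf u x) -> ~ nf (RApp s u) t.
Proof. intros H Ht. apply nf_app in Ht. destruct Ht as [s' [u' [_ [Hu _]]]]. eapply H; eauto. Qed.

Lemma nf_zero b u t : length (bag_list b) <> 1 -> ~ nf (RApp (RBag b) u) t.
Proof.
  intros Hl Ht. apply (step_nf _ _ (rs_zero b u Hl)) in Ht. destruct Ht as [? [[] _]].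
Qed.

Lemma nf_step_eq x y t : rstep x (eq y) -> (nf x t <-> nf y t).
Proof.
  intros H. rewrite (step_nf _ _ H t). split.
  - intros [z [<- Hz]]; auto.
  - intros Hy. exists y; auto.
Qed.

Definition vnormal (v : rval) := match v with RVar _ => True | RLam t => rnormal t end.
Definition nfv (v : rval) : rval -> Prop :=
  match v with RVar x => eq (RVar x) | RLam t => fun v' => exists t', nf t t' /\ v' = RLam t' end.
Fixpoint nfl (l : list rval) (l' : list rval) : Prop :=
  match l with
  | [] => l' = []
  | v :: l => exists v' l0, nfv v v' /\ nfl l l0 /\ l' = v' :: l0
  end.

Lemma normal_bag k : Forall vnormal k -> rnormal (RBag (lbag k)).
Proof.
  intros HF E HE. destruct (rstep_bag_inv _ _ HE) as [l1 [t [l2 [T [Eb [HT _]]]]]].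
  rewrite bag_list_lbag in Eb. subst. rewrite Forall_forall in HF.
  assert (vnormal (RLam t)) by (apply HF; apply in_or_app; right; left; auto).
  simpl in H. eapply H; eauto.
Qed.

Lemma nfv_vnormal v v' : nfv v v' -> vnormal v'.
Proof.
  destruct v; simpl.
  - intros <-; simpl; auto.
  - intros [t' [Ht ->]]. simpl. apply (nf_normal r); auto.
Qed.

Lemma nf_bag_gen l : forall k, Forall vnormal k ->
  forall t, nf (RBag (lbag (k ++ l))) t <-> exists l', nfl l l' /\ t = RBag (lbag (k ++ l')).
Proof.
  induction l as [|v l IH]; intros k Hk t.
  - rewrite app_nil_r. rewrite normal_nf by (apply normal_bag; auto). simpl. split.
    + intros ->. exists []; rewrite app_nil_r; auto.
    + intros [l' [-> ->]]. rewrite app_nil_r; auto.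
  - destruct v as [x | r].
    + replace (k ++ RVar x :: l) with ((k ++ [RVar x]) ++ l) by (rewrite <- app_assoc; auto).
      rewrite IH. 2:{ apply Forall_app; split; auto; repeat constructor. }
      split.
      * intros [l' [Hl ->]]. exists (RVar x :: l'). split. exists (RVar x), l'; simpl; auto.
        rewrite <- app_assoc; auto.
      * intros [l' [[v' [l0 [Hv [Hl ->]]]] ->]]. simpl in Hv; subst. exists l0; split; auto.
        rewrite <- app_assoc; auto.
    + rewrite (nf_ctx (fun x => RBag (lbag (k ++ RLam x :: l))) r (ctx_bagpos k l) t). split.
      * intros [r' [Hr Ht]].
        replace (k ++ RLam r' :: l) with ((k ++ [RLam r']) ++ l) in Ht by (rewrite <- app_assoc; auto).
        rewrite IH in Ht. 2:{ apply Forall_app; split; auto. constructor; auto. simpl. apply (nf_normal r); auto. }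
        destruct Ht as [l' [Hl ->]]. exists (RLam r' :: l'). split. exists (RLam r'), l'. simpl; repeat split; eauto.
        rewrite <- app_assoc; auto.
      * intros [l' [[v' [l0 [[r' [Hr ->]] [Hl ->]]]] ->]]. exists r'; split; auto.
        replace (k ++ RLam r' :: l) with ((k ++ [RLam r']) ++ l) by (rewrite <- app_assoc; auto).
        rewrite IH. 2:{ apply Forall_app; split; auto. constructor; auto. simpl. apply (nf_normal r); auto. }
        exists l0; split; auto. rewrite <- app_assoc; auto.
Qed.

Lemma nf_bag b t : nf (RBag b) t <-> exists l', nfl (bag_list b) l' /\ t = RBag (lbag l').
Proof.
  pose proof (nf_bag_gen (bag_list b) [] (Forall_nil _) t) as H. simpl in H.
  rewrite lbag_bag_list in H. exact H.
Qed.

Definition Tv (V : lterm) : rval -> Prop :=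
  match V with
  | LVar x => fun v => v = RVar x
  | LLam N => fun v => exists u, v = RLam u /\ taylor N u
  | LApp _ _ => fun _ => False
  end.

Lemma taylor_val V w : is_value V -> (taylor V w <-> exists b, w = RBag b /\ bag_all (Tv V) b).
Proof. destruct V; simpl; tauto. Qed.

Lemma bag_all_Forall P b : bag_all P b <-> Forall P (bag_list b).
Proof.
  induction b; simpl. split; auto. rewrite IHb. split.
  - intros [? ?]; constructor; auto.
  - intro H; inversion H; auto.
Qed.

Fixpoint bmap (f : rval -> rval) (b : rbag) : rbag :=
  match b with BNil => BNil | BCons v b => BCons (f v) (bmap f b) end.

Lemma blift_bmap k c b : blift k c b = bmap (vlift k c) b.
Proof. induction b; simpl; f_equal; auto. Qed.

Lemma bag_all_map (P Q : rval -> Prop) (f : rval -> rval) :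
  (forall v, Q v <-> exists v0, P v0 /\ v = f v0) ->
  forall b, bag_all Q b <-> exists b0, bag_all P b0 /\ b = bmap f b0.
Proof.
  intros H b. induction b as [|v b IH]; simpl.
  - split; auto. intros _. exists BNil; simpl; auto.
  - rewrite IH, H. split.
    + intros [[v0 [Hv0 ->]] [b0 [Hb0 ->]]]. exists (BCons v0 b0); simpl; auto.
    + intros [[|v0 b0] [Hb E]]; simpl in *; inversion E; subst.
      destruct Hb. split; eauto.
Qed.

Lemma taylor_lift M : forall k c w, taylor (llift k c M) w <-> exists t, taylor M t /\ w = rlift k c t.
Proof.
  induction M as [m | N IH | P IHP Q IHQ]; intros k c w.
  - replace (llift k c (LVar m)) with (LVar (if c <=? m then m + k else m)) by (simpl; destruct (c <=? m); auto).
    simpl. assert (HQ : forall v, v = RVar (if c <=? m then m + k else m) <->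
                 exists v0, v0 = RVar m /\ v = vlift k c v0).
    { intro v. split.
      - intros ->. exists (RVar m); split; auto. simpl. destruct (c <=? m); auto.
      - intros [v0 [-> ->]]. simpl. destruct (c <=? m); auto. }
    split.
    + intros [b [-> Hb]]. apply (bag_all_map _ _ _ HQ) in Hb. destruct Hb as [b0 [Hb0 ->]].
      exists (RBag b0); split; eauto. simpl. rewrite blift_bmap; auto.
    + intros [t [[b0 [-> Hb0]] ->]]. simpl. eexists; split; eauto.
      apply (bag_all_map _ _ _ HQ). exists b0; split; auto. apply blift_bmap.
  - simpl. assert (HQ : forall v, (exists u, v = RLam u /\ taylor (llift k (S c) N) u) <->
                 exists v0, (exists u, v0 = RLam u /\ taylor N u) /\ v = vlift k c v0).
    { intro v. split.
      - intros [u [-> Hu]]. apply IH in Hu. destruct Hu as [u0 [Hu0 ->]].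
        exists (RLam u0); split; eauto.
      - intros [v0 [[u0 [-> Hu0]] ->]]. simpl. eexists; split; eauto. apply IH; eauto. }
    split.
    + intros [b [-> Hb]]. apply (bag_all_map _ _ _ HQ) in Hb. destruct Hb as [b0 [Hb0 ->]].
      exists (RBag b0); split; eauto. simpl. rewrite blift_bmap; auto.
    + intros [t [[b0 [-> Hb0]] ->]]. simpl. eexists; split; eauto.
      apply (bag_all_map _ _ _ HQ). exists b0; split; auto. apply blift_bmap.
  - simpl. split.
    + intros [s [u [-> [Hs Hu]]]]. apply IHP in Hs. apply IHQ in Hu.
      destruct Hs as [s0 [Hs0 ->]], Hu as [u0 [Hu0 ->]]. exists (RApp s0 u0); simpl; split; eauto.
    + intros [t [[s [u [-> [Hs Hu]]]] ->]]. simpl. exists (rlift k c s), (rlift k c u).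
      repeat split; auto. apply IHP; eauto. apply IHQ; eauto.
Qed.

Lemma Tv_lift V k c v : is_value V -> (Tv (llift k c V) v <-> exists v0, Tv V v0 /\ v = vlift k c v0).
Proof.
  destruct V as [m | N | P Q]; simpl; intros HV; [| |contradiction].
  - destruct (Nat.leb_spec c m); simpl; split;
      [intros ->; exists (RVar m); split; auto; simpl | intros [v0 [-> ->]]; simpl
      |intros ->; exists (RVar m); split; auto; simpl | intros [v0 [-> ->]]; simpl];
      destruct (Nat.leb_spec c m); auto; lia.
  - split.
    + intros [u [-> Hu]]. apply taylor_lift in Hu. destruct Hu as [u0 [Hu0 ->]].
      exists (RLam u0); split; eauto.
    + intros [v0 [[u0 [-> Hu0]] ->]]. simpl. eexists; split; eauto. apply taylor_lift; eauto.
Qed.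

Lemma llift_value V k c : is_value V -> is_value (llift k c V).
Proof. destruct V; simpl; auto. destruct (c <=? n); simpl; auto. Qed.

Lemma Forall_perm {X} (P : X -> Prop) l l' : Forall P l -> Permutation l l' -> Forall P l'.
Proof. rewrite !Forall_forall. intros H Hp x Hx. apply H. eapply Permutation_in; [apply Permutation_sym; exact Hp | exact Hx]. Qed.

Lemma Forall_perm_app {X} (P : X -> Prop) l l1 l2 : Forall P l -> Permutation l (l1 ++ l2) -> Forall P l1 /\ Forall P l2.
Proof. intros H Hp. apply (Forall_perm _ _ _ H) in Hp. apply Forall_app in Hp; auto. Qed.

Lemma blift_lbag k c b : blift k c b = lbag (map (vlift k c) (bag_list b)).
Proof. induction b; simpl; f_equal; auto. Qed.

Lemma varbag_hit d bx vs b' : bag_all (fun v => v = RVar d) bx -> lsubb d bx vs b' ->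
  exists l, Permutation vs l /\ b' = lbag (map (vlift d 0) l).
Proof.
  intros Hb H. revert Hb. induction H; intros Hb.
  - exists []; auto.
  - simpl in Hb. destruct Hb as [-> Hb]. destruct (IHlsubb Hb) as [l [Pl ->]].
    inversion H0; subst; try lia.
    match goal with Hv : lsubv _ _ [?x] _ |- _ => exists (x :: l) end. split; auto.
    eapply Permutation_trans; eauto. simpl. apply perm_skip; auto.
Qed.

Lemma varbag_hit_intro d l : lsubb d (lbag (map (fun _ => RVar d) l)) l (lbag (map (vlift d 0) l))
  /\ bag_all (fun v => v = RVar d) (lbag (map (fun _ => RVar d) l)).
Proof.
  induction l as [|v l [IH1 IH2]]; simpl. split; [constructor | auto].
  split; auto. eapply lsb_cons with (vs1 := [v]) (vs2 := l); auto. constructor.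
Qed.

Lemma varbag_miss d m bx vs b' : m <> d -> bag_all (fun v => v = RVar m) bx -> lsubb d bx vs b' ->
  vs = [] /\ bag_all (fun v => v = RVar (if d <? m then pred m else m)) b'.
Proof.
  intros Hne Hb H. revert Hb. induction H; intros Hb.
  - auto.
  - simpl in Hb. destruct Hb as [-> Hb]. destruct (IHlsubb Hne Hb) as [-> Hb'].
    inversion H0; subst; try lia.
    all: split; [rewrite ?app_nil_r in H; apply Permutation_nil, Permutation_sym; auto
                | simpl; destruct (Nat.ltb_spec d m); try lia; auto].
Qed.

Lemma varbag_miss_intro d m b' : m <> d -> bag_all (fun v => v = RVar (if d <? m then pred m else m)) b' ->
  exists bx, bag_all (fun v => v = RVar m) bx /\ lsubb d bx [] b'.
Proof.
  intros Hne. induction b' as [|v b' IH]; simpl; intros Hb.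
  - exists BNil; split; simpl; auto. constructor.
  - destruct Hb as [-> Hb]. destruct (IH Hb) as [bx [Hbx Hl]].
    exists (BCons (RVar m) bx); split; simpl; auto.
    eapply lsb_cons with (vs1 := []) (vs2 := []); auto.
    destruct (Nat.ltb_spec d m); [apply lsv_gt | apply lsv_lt]; lia.
Qed.

Lemma taylor_subst V (HV : is_value V) M : forall d w,
  taylor (lsubst d V M) w <-> exists t vs, taylor M t /\ Forall (Tv V) vs /\ lsub d t vs w.
Proof.
  induction M as [m | N IH | P IHP Q IHQ]; intros d w.
  - simpl lsubst. destruct (Nat.eqb_spec m d) as [->|Hne].
    + rewrite taylor_lift. split.
      * intros [t0 [Ht0 ->]]. apply (taylor_val _ _ HV) in Ht0. destruct Ht0 as [b0 [-> Hb0]].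
        destruct (varbag_hit_intro d (bag_list b0)) as [H1 H2].
        exists (RBag (lbag (map (fun _ => RVar d) (bag_list b0)))), (bag_list b0).
        split. simpl. eexists; split; eauto.
        split. apply bag_all_Forall; auto.
        simpl. rewrite blift_lbag. constructor; auto.
      * intros [t [vs [[bx [-> Hbx]] [Hvs Hl]]]]. inversion Hl; subst.
        destruct (varbag_hit _ _ _ _ Hbx ltac:(eassumption)) as [l [Pl ->]].
        exists (RBag (lbag l)). split.
        -- apply (taylor_val _ _ HV). eexists; split; eauto. apply bag_all_Forall.
           rewrite bag_list_lbag. eapply Forall_perm; eauto.
        -- simpl. rewrite blift_lbag, bag_list_lbag. auto.
    + assert (E : (if d <? m then LVar (pred m) else LVar m) = LVar (if d <? m then pred m else m))
        by (destruct (d <? m); auto).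
      rewrite E. simpl. split.
      * intros [b [-> Hb]]. destruct (varbag_miss_intro _ _ _ Hne Hb) as [bx [Hbx Hl]].
        exists (RBag bx), []. repeat split; auto. eexists; split; eauto. constructor; auto.
      * intros [t [vs [[bx [-> Hbx]] [Hvs Hl]]]]. inversion Hl; subst.
        destruct (varbag_miss _ _ _ _ _ Hne Hbx ltac:(eassumption)) as [-> Hb']. eexists; split; eauto.
  - simpl. split.
    + intros [b [-> Hb]]. revert Hb. induction b as [|v b IHb]; simpl; intros Hb.
      * exists (RBag BNil), []. repeat split; auto. exists BNil; simpl; auto. repeat constructor.
      * destruct Hb as [[u [-> Hu]] Hb]. apply IH in Hu. destruct Hu as [t [vs [Ht [Hvs Hl]]]].
        destruct (IHb Hb) as [t0 [vs0 [[bx [-> Hbx]] [Hvs0 Hl0]]]].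
        inversion Hl0; subst.
        exists (RBag (BCons (RLam t) bx)), (vs ++ vs0). split.
        -- eexists; split; eauto. simpl. split; eauto.
        -- split. apply Forall_app; auto. constructor. eapply lsb_cons; eauto. constructor; auto.
    + intros [t [vs [[bx [-> Hbx]] [Hvs Hl]]]]. inversion Hl; subst. eexists; split; eauto.
      clear Hl. revert Hbx Hvs. match goal with Hh : lsubb _ _ _ _ |- _ => induction Hh end; simpl; intros Hbx Hvs; auto.
      destruct Hbx as [[u [-> Hu]] Hbx]. destruct (Forall_perm_app _ _ _ _ Hvs H) as [Hv1 Hv2].
      inversion H0; subst. split; auto. eexists; split; eauto. apply IH. eauto.
  - simpl. split.
    + intros [s [u [-> [Hs Hu]]]]. apply IHP in Hs. apply IHQ in Hu.
      destruct Hs as [t1 [vs1 [H1 [H2 H3]]]], Hu as [t2 [vs2 [H4 [H5 H6]]]].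
      exists (RApp t1 t2), (vs1 ++ vs2). split. eauto. split. apply Forall_app; auto.
      eapply ls_app; eauto.
    + intros [t [vs [[s [u [-> [Hs Hu]]]] [Hvs Hl]]]]. inversion Hl; subst.
      destruct (Forall_perm_app _ _ _ _ Hvs ltac:(eassumption)) as [Hv1 Hv2].
      exists s', u'. split; auto. split. apply IHP; eauto. apply IHQ; eauto.
Qed.

Definition NT (M : lterm) : rset := nfs (taylor M).

Lemma bag1_cases b : (exists v, b = sing v) \/ length (bag_list b) <> 1.
Proof. destruct b as [|v [|w b]]; simpl; auto. left; exists v; auto. Qed.

Lemma NT_app P Q t : NT (LApp P Q) t <-> exists s' u', NT P s' /\ NT Q u' /\ nf (RApp s' u') t.
Proof.
  unfold NT, nfs. simpl. split.
  - intros [e [[s [u [-> [Hs Hu]]]] Ht]]. apply nf_app in Ht. destruct Ht as [s' [u' [H1 [H2 H3]]]].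
    exists s', u'. repeat split; eauto.
  - intros [s' [u' [[s [Hs H1]] [[u [Hu H2]] H3]]]]. exists (RApp s u). split. eauto.
    apply nf_app. eauto.
Qed.

Lemma lam_nfl M l' : (exists b, bag_all (fun v => exists u, v = RLam u /\ taylor M u) b /\ nfl (bag_list b) l') <->
  Forall (fun v => exists f, v = RLam f /\ NT M f) l'.
Proof.
  split.
  - intros [b [Hb Hl]]. revert l' Hl. induction b as [|v b IH]; simpl in *; intros l' Hl.
    + subst; auto.
    + destruct Hb as [[u [-> Hu]] Hb]. destruct Hl as [v' [l0 [[t' [Ht' ->]] [Hl ->]]]].
      constructor; auto. exists t'; split; auto. exists u; auto.
  - induction l' as [|v l' IH]; intros HF.
    + exists BNil; simpl; auto.
    + inversion HF; subst. destruct H1 as [f [-> [u [Hu Hf]]]]. destruct (IH H2) as [b [Hb Hl]].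
      exists (BCons (RLam u) b). simpl. split. split; eauto. exists (RLam f), l'. repeat split; eauto.
Qed.

Lemma NT_lam M t : NT (LLam M) t <-> exists l', Forall (fun v => exists f, v = RLam f /\ NT M f) l' /\ t = RBag (lbag l').
Proof.
  unfold NT at 1, nfs. simpl. split.
  - intros [e [[b [-> Hb]] Ht]]. apply nf_bag in Ht. destruct Ht as [l' [Hl ->]].
    exists l'; split; auto. apply lam_nfl. eauto.
  - intros [l' [HF ->]]. apply lam_nfl in HF. destruct HF as [b [Hb Hl]].
    exists (RBag b); split; eauto. apply nf_bag. eauto.
Qed.

Lemma NT_beta M V : is_value V -> forall t, NT (LApp (LLam M) V) t <-> NT (lsubst 0 V M) t.
Proof.
  intros HV t.
  assert (Hl : NT (LApp (LLam M) V) t <-> exists t0 vs w, taylor M t0 /\ Forall (Tv V) vs /\ lsub 0 t0 vs w /\ nf w t).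
  { unfold NT, nfs. simpl. split.
    - intros [e [[s [u [-> [[b1 [-> Hb1]] Hu]]]] Ht]].
      apply (taylor_val _ _ HV) in Hu. destruct Hu as [b2 [-> Hb2]].
      destruct (bag1_cases b1) as [[v ->]|Hlen]; [|exfalso; eapply nf_zero; eauto].
      simpl in Hb1. destruct Hb1 as [[t0 [-> Ht0]] _].
      apply (step_nf _ _ (rs_beta t0 b2)) in Ht. destruct Ht as [w [Hw Ht]].
      exists t0, (bag_list b2), w. repeat split; auto. apply bag_all_Forall; auto.
    - intros [t0 [vs [w [Ht0 [Hvs [Hw Ht]]]]]].
      exists (RApp (RBag (sing (RLam t0))) (RBag (lbag vs))). split.
      + exists (RBag (sing (RLam t0))), (RBag (lbag vs)). repeat split.
        * exists (sing (RLam t0)); simpl; split; eauto.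
        * apply (taylor_val _ _ HV). eexists; split; eauto. apply bag_all_Forall. rewrite bag_list_lbag; auto.
      + apply (step_nf _ _ (rs_beta t0 (lbag vs))). exists w; split; auto. rewrite bag_list_lbag; auto. }
  rewrite Hl. unfold NT, nfs. split.
  - intros [t0 [vs [w [Ht0 [Hvs [Hw Ht]]]]]]. exists w; split; auto. apply taylor_subst; eauto.
  - intros [w [Hw Ht]]. apply taylor_subst in Hw; auto. destruct Hw as [t0 [vs [? [? ?]]]]. eauto 7.
Qed.

Lemma NT_sigma1 M N P t : NT (LApp (LApp (LLam M) N) P) t <-> NT (LApp (LLam (LApp M (llift 1 0 P))) N) t.
Proof.
  transitivity (exists t0 s1 s2, taylor M t0 /\ taylor N s1 /\ taylor P s2 /\
                 nf (RApp (RBag (sing (RLam (RApp t0 (rlift 1 0 s2))))) s1) t).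
  - unfold NT, nfs. simpl. split.
    + intros [e [[s [s2 [-> [[s' [s1 [-> [[b1 [-> Hb1]] Hs1]]]] Hs2]]]] Ht]].
      destruct (bag1_cases b1) as [[v ->]|Hlen].
      * simpl in Hb1. destruct Hb1 as [[t0 [-> Ht0]] _].
        apply (nf_step_eq _ _ _ (rs_sigma1 t0 s1 s2)) in Ht. eauto 8.
      * exfalso. eapply nf_empty_app_l; [|exact Ht]. intros x Hx. eapply nf_zero; eauto.
    + intros [t0 [s1 [s2 [Ht0 [Hs1 [Hs2 Ht]]]]]].
      exists (RApp (RApp (RBag (sing (RLam t0))) s1) s2). split.
      * exists (RApp (RBag (sing (RLam t0))) s1), s2. repeat split; auto.
        exists (RBag (sing (RLam t0))), s1. repeat split; auto. exists (sing (RLam t0)); simpl; split; eauto.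
      * apply (nf_step_eq _ _ _ (rs_sigma1 t0 s1 s2)); auto.
  - unfold NT, nfs. simpl. split.
    + intros [t0 [s1 [s2 [Ht0 [Hs1 [Hs2 Ht]]]]]].
      eexists; split; [|exact Ht]. eexists _, s1. repeat split; auto.
      exists (sing (RLam (RApp t0 (rlift 1 0 s2)))). simpl. split; auto. split; auto.
      eexists; split; [reflexivity|]. exists t0, (rlift 1 0 s2). repeat split; auto.
      apply taylor_lift; eauto.
    + intros [e [[s [s1 [-> [[b [-> Hb]] Hs1]]]] Ht]].
      destruct (bag1_cases b) as [[v ->]|Hlen].
      * simpl in Hb. destruct Hb as [[r [-> [t0 [s2' [-> [Ht0 Hs2]]]]]] _].
        apply taylor_lift in Hs2. destruct Hs2 as [s2 [Hs2 ->]]. eauto 8.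
      * exfalso. eapply nf_zero; eauto.
Qed.

Lemma NT_sigma3 V M N : is_value V -> forall t,
  NT (LApp V (LApp (LLam M) N)) t <-> NT (LApp (LLam (LApp (llift 1 0 V) M)) N) t.
Proof.
  intros HV t.
  transitivity (exists v t0 s0, Tv V v /\ taylor M t0 /\ taylor N s0 /\
                 nf (RApp (RBag (sing (RLam (RApp (RBag (sing (vlift 1 0 v))) t0)))) s0) t).
  - unfold NT, nfs. simpl. split.
    + intros [e [[s [u [-> [Hs [s' [s0 [-> [[b1 [-> Hb1]] Hs0]]]]]]]] Ht]].
      apply (taylor_val _ _ HV) in Hs. destruct Hs as [bv [-> Hbv]].
      destruct (bag1_cases bv) as [[v ->]|Hlen]; [|exfalso; eapply nf_zero; eauto].
      destruct (bag1_cases b1) as [[w ->]|Hlen1].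
      * simpl in Hb1, Hbv. destruct Hb1 as [[t0 [-> Ht0]] _]. destruct Hbv as [Hv _].
        apply (nf_step_eq _ _ _ (rs_sigma3 v t0 s0)) in Ht. eauto 8.
      * exfalso. eapply nf_empty_app_r; [|exact Ht]. intros x Hx. eapply nf_zero; eauto.
    + intros [v [t0 [s0 [Hv [Ht0 [Hs0 Ht]]]]]].
      exists (RApp (RBag (sing v)) (RApp (RBag (sing (RLam t0))) s0)). split.
      * exists (RBag (sing v)), (RApp (RBag (sing (RLam t0))) s0). repeat split; auto.
        -- apply (taylor_val _ _ HV). exists (sing v); simpl; auto.
        -- exists (RBag (sing (RLam t0))), s0. repeat split; auto. exists (sing (RLam t0)); simpl; split; eauto.
      * apply (nf_step_eq _ _ _ (rs_sigma3 v t0 s0)); auto.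
  - unfold NT, nfs. simpl. split.
    + intros [v [t0 [s0 [Hv [Ht0 [Hs0 Ht]]]]]].
      eexists; split; [|exact Ht]. eexists _, s0. repeat split; auto.
      eexists. simpl. split; [reflexivity|]. split; auto.
      eexists; split; [reflexivity|]. exists (RBag (sing (vlift 1 0 v))), t0. repeat split; auto.
      apply taylor_lift. exists (RBag (sing v)). split; auto.
      apply (taylor_val _ _ HV). exists (sing v); simpl; auto.
      simpl; auto.
    + intros [e [[s [s0 [-> [[b [-> Hb]] Hs0]]]] Ht]].
      destruct (bag1_cases b) as [[v ->]|Hlen]; [|exfalso; eapply nf_zero; eauto].
      simpl in Hb. destruct Hb as [[r [-> [w [t0 [-> [Hw Ht0]]]]]] _].
      apply taylor_lift in Hw. destruct Hw as [w0 [Hw0 ->]].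
      apply (taylor_val _ _ HV) in Hw0. destruct Hw0 as [bv [-> Hbv]].
      destruct (bag1_cases bv) as [[v' ->]|Hlen].
      * simpl in Hbv. destruct Hbv as [Hv' _]. eauto 8.
      * exfalso. eapply nf_empty_app_l; [|exact Ht]. intros x Hx.
        apply nf_bag in Hx. destruct Hx as [l' [[v'' [l0 [[t' [Ht' ->]] _]]] _]].
        eapply nf_zero; [|exact Ht']. simpl. rewrite blift_lbag, bag_list_lbag, length_map. auto.
Qed.

Lemma NT_step M N : vstep M N -> forall t, NT M t <-> NT N t.
Proof.
  induction 1; intro t.
  - apply NT_beta; auto.
  - apply NT_sigma1.
  - apply NT_sigma3; auto.
  - rewrite !NT_lam. split; intros [l' [HF ->]]; exists l'; split; auto;
      eapply Forall_impl; try exact HF; intros v [f [-> Hf]]; exists f; split; auto; apply IHvstep; auto.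
  - rewrite !NT_app. split; intros [s' [u' [H1 [H2 H3]]]]; exists s', u'; repeat split; auto; apply IHvstep; auto.
  - rewrite !NT_app. split; intros [s' [u' [H1 [H2 H3]]]]; exists s', u'; repeat split; auto; apply IHvstep; auto.
Qed.

Lemma NT_veq M N : veq M N -> forall t, NT M t <-> NT N t.
Proof.
  induction 1; intro t.
  - apply NT_step; auto.
  - tauto.
  - rewrite IHclos_refl_sym_trans; tauto.
  - rewrite IHclos_refl_sym_trans1; auto.
Qed.

Theorem corollary4p5 (M N : lterm) :
  veq M N -> rset_eq (NFset (taylor M)) (NFset (taylor N)).
Proof.
  intros H t. split.
  - intros [t' [H1 H2]]. exists t'; split; auto.
    apply NFset_nfs. apply NFset_nfs in H1. apply (NT_veq M N H t'). exact H1.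
  - intros [t' [H1 H2]]. exists t'; split; auto.
    apply NFset_nfs. apply NFset_nfs in H1. apply (NT_veq M N H t'). exact H1.
Qed.
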